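(* Let $k_1,k_2,m$ be positive integers and $\phi_1\in J_{k_1,m}$, $\phi_2\in J_{k_2,m}$ (classical Jacobi forms). Define $$H(\phi_1,\phi_2)(\tau,z_1,z_2)=\sum_{\epsilon\in\mathcal O_K^\times}\Bigl(\phi_1\bigl(\tau,\tfrac12(z_1+z_2)\bigr)\,\phi_2\bigl(\tau,\tfrac i2(z_1-z_2)\bigr)\Bigr)\Big|_{k_1+k_2}\epsilon I.$$ Then $H(\phi_1,\phi_2)\in J^1_{k_1+k_2,m}(\mathcal O_K)$. If moreover $\phi_1,\phi_2$ are cusp forms, then $H(\phi_1,\phi_2)$ is a cusp form.
   Context: Notation: $\mathcal H$ is the upper half plane, $e(x)=e^{2\pi i x}$, $K=\mathbb Q(i)$, $\mathcal O_K=\mathbb Z[i]$, $\mathcal O_K^\times=\{\pm1,\pm i\}$, $N(x)=x\bar x$, $\mathcal O_K^\sharp=\frac i2\mathcal O_K$. $J_{k,m}$ denotes the space of classical (Eichler–Zagier) Jacobi forms of weight $k$ and index $m$ on $SL(2,\mathbb Z)\ltimes\mathbb Z^2$. For a function $\psi$ on $\mathcal H\times\mathbb C^2$ and $\epsilon\in\mathcal O_K^\times$, $(\psi|_k\epsilon I)(\tau,z_1,z_2)=\epsilon^{-k}\psi(\tau,\epsilon z_1,\bar\epsilon z_2)$. For $M=\begin{pmatrix}a&b\\c&d\end{pmatrix}\in SL(2,\mathbb Z)$, $(\phi|_{k,m}M)(\tau,z_1,z_2)=(c\tau+d)^{-k}e^{-2\pi i m c z_1z_2/(c\tau+d)}\phi\bigl(M\tau,\tfrac{z_1}{c\tau+d},\tfrac{z_2}{c\tau+d}\bigr)$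 and for $\lambda,\mu\in\mathcal O_K$, $(\phi|_m[\lambda,\mu])(\tau,z_1,z_2)=e^{2\pi i m(N(\lambda)\tau+\bar\lambda z_1+\lambda z_2)}\phi(\tau,z_1+\lambda\tau+\mu,z_2+\bar\lambda\tau+\bar\mu)$. $J^1_{k,m}(\mathcal O_K)$ is the space of holomorphic $\phi:\mathcal H\times\mathbb C^2\to\mathbb C$ with $\phi|_{k,m}M=\phi$ for all $M\in SL(2,\mathbb Z)$, $\phi|_m[\lambda,\mu]=\phi$ for all $\lambda,\mu\in\mathcal O_K$, and with a Fourier expansion $\phi=\sum_{n\ge0}\sum_{r\in\mathcal O_K^\sharp,\,nm\ge N(r)}c_\phi(n,r)e(n\tau+rz_1+\bar rz_2)$; it is a cusp form if $c_\phi(n,r)=0$ whenever $nm=N(r)$. *)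

(* Defs.v *)
From Stdlib Require Import Reals Lra Lia ZArith List.
Import ListNotations.
Open Scope R_scope.

Definition CC : Type := (R * R)%type.
Definition Cre (z : CC) : R := fst z.
Definition Cim (z : CC) : R := snd z.
Definition RtoC (x : R) : CC := (x, 0).
Definition C0 : CC := (0, 0).
Definition C1 : CC := (1, 0).
Definition Ci : CC := (0, 1).
Definition Cadd (z w : CC) : CC := (Cre z + Cre w, Cim z + Cim w).
Definition Copp (z : CC) : CC := (- Cre z, - Cim z).
Definition Csub (z w : CC) : CC := Cadd z (Copp w).
Definition Cmul (z w : CC) : CC :=
  (Cre z * Cre w - Cim z * Cim w, Cre z * Cim w + Cim z * Cre w).
Definition Cconj (z : CC) : CC := (Cre z, - Cim z).
Definition Nrm (z : CC) : R := Cre z * Cre z + Cim z * Cim z.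
Definition Cnorm (z : CC) : R := sqrt (Nrm z).
Definition Cinv (z : CC) : CC := (Cre z / Nrm z, - Cim z / Nrm z).
Definition Cdiv (z w : CC) : CC := Cmul z (Cinv w).
Fixpoint Cpow (z : CC) (n : nat) : CC :=
  match n with O => C1 | S n' => Cmul z (Cpow z n') end.
Definition Cexp (z : CC) : CC := (exp (Cre z) * cos (Cim z), exp (Cre z) * sin (Cim z)).
Definition CZ (a : Z) : CC := RtoC (IZR a).
Definition Cnat (n : nat) : CC := RtoC (INR n).
Definition Cgauss (a b : Z) : CC := (IZR a, IZR b).

Definition ee (x : CC) : CC := Cexp (Cmul (Cmul (RtoC (2 * PI)) Ci) x).

Definition inH (t : CC) : Prop := 0 < Cim t.

Definition Cdiff_at (g : CC -> CC) (a : CC) : Prop :=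
  exists l : CC, forall eps, 0 < eps -> exists delta, 0 < delta /\
    forall h, 0 < Cnorm h < delta ->
      Cnorm (Csub (Cdiv (Csub (g (Cadd a h)) (g a)) h) l) < eps.

(* holomorphic on H x C : jointly continuous and complex differentiable in
   each variable separately (equivalent to holomorphy by Osgood's lemma) *)
Definition holo2 (f : CC -> CC -> CC) : Prop :=
  (forall t z, inH t ->
     forall eps, 0 < eps -> exists delta, 0 < delta /\
       forall t' z', Cnorm (Csub t' t) < delta -> Cnorm (Csub z' z) < delta ->
         Cnorm (Csub (f t' z') (f t z)) < eps)
  /\ (forall t z, inH t -> Cdiff_at (fun s => f s z) t /\ Cdiff_at (fun w => f t w) z).

Definition holo3 (f : CC -> CC -> CC -> CC) : Prop :=
  (forall t z1 z2, inH t ->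
     forall eps, 0 < eps -> exists delta, 0 < delta /\
       forall t' z1' z2', Cnorm (Csub t' t) < delta -> Cnorm (Csub z1' z1) < delta ->
         Cnorm (Csub z2' z2) < delta ->
         Cnorm (Csub (f t' z1' z2') (f t z1 z2)) < eps)
  /\ (forall t z1 z2, inH t ->
        Cdiff_at (fun s => f s z1 z2) t /\ Cdiff_at (fun w => f t w z2) z1
        /\ Cdiff_at (fun w => f t z1 w) z2).

Fixpoint Csum (l : list CC) : CC :=
  match l with [] => C0 | x :: l' => Cadd x (Csum l') end.

(* the family a is summable (as an unordered sum, i.e. along the net of finite
   subsets) with sum S *)
Definition has_usum {I : Type} (a : I -> CC) (S : CC) : Prop :=
  forall eps, 0 < eps -> exists F0 : list I, forall F : list I,
    NoDup F -> incl F0 F -> Cnorm (Csub (Csum (map a F)) S) < eps.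

Definition isSL2 (a b c d : Z) : Prop := (a * d - b * c = 1)%Z.
Definition mobius (a b c d : Z) (t : CC) : CC :=
  Cdiv (Cadd (Cmul (CZ a) t) (CZ b)) (Cadd (Cmul (CZ c) t) (CZ d)).

Definition slash_cl (k m : nat) (a b c d : Z) (phi : CC -> CC -> CC) : CC -> CC -> CC :=
  fun t z =>
    let j := Cadd (Cmul (CZ c) t) (CZ d) in
    Cmul (Cmul (Cinv (Cpow j k))
               (ee (Copp (Cdiv (Cmul (Cmul (Cnat m) (CZ c)) (Cmul z z)) j))))
         (phi (mobius a b c d t) (Cdiv z j)).

Definition heis_cl (m : nat) (l mu : Z) (phi : CC -> CC -> CC) : CC -> CC -> CC :=
  fun t z =>
    Cmul (ee (Cmul (Cnat m) (Cadd (Cmul (CZ (l * l)) t) (Cmul (CZ (2 * l)) z))))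
         (phi t (Cadd z (Cadd (Cmul (CZ l) t) (CZ mu)))).

Definition fourier_cl (phi : CC -> CC -> CC) (c : nat -> Z -> CC) : Prop :=
  forall t z, inH t ->
    has_usum (fun p : nat * Z =>
                Cmul (c (fst p) (snd p))
                     (ee (Cadd (Cmul (Cnat (fst p)) t) (Cmul (CZ (snd p)) z))))
             (phi t z).

Definition JacobiForm (k m : nat) (phi : CC -> CC -> CC) : Prop :=
  holo2 phi
  /\ (forall a b c d, isSL2 a b c d -> forall t z, inH t ->
        slash_cl k m a b c d phi t z = phi t z)
  /\ (forall l mu t z, inH t -> heis_cl m l mu phi t z = phi t z)
  /\ exists coef : nat -> Z -> CC,
       (forall n r, ~ (IZR r * IZR r <= 4 * INR n * INR m) -> coef n r = C0)
       /\ fourier_cl phi coef.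

Definition JacobiCuspForm (k m : nat) (phi : CC -> CC -> CC) : Prop :=
  JacobiForm k m phi
  /\ forall coef, fourier_cl phi coef ->
       forall n r, IZR r * IZR r = 4 * INR n * INR m -> coef n r = C0.

(* the units of O_K = Z[i] *)
Definition units_OK : list CC := [C1; Copp C1; Ci; Copp Ci].

Definition slash_unit (k : nat) (eps : CC) (psi : CC -> CC -> CC -> CC) : CC -> CC -> CC -> CC :=
  fun t z1 z2 => Cmul (Cinv (Cpow eps k)) (psi t (Cmul eps z1) (Cmul (Cconj eps) z2)).

Definition slash_h (k m : nat) (a b c d : Z) (phi : CC -> CC -> CC -> CC) : CC -> CC -> CC -> CC :=
  fun t z1 z2 =>
    let j := Cadd (Cmul (CZ c) t) (CZ d) in
    Cmul (Cmul (Cinv (Cpow j k))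
               (ee (Copp (Cdiv (Cmul (Cmul (Cnat m) (CZ c)) (Cmul z1 z2)) j))))
         (phi (mobius a b c d t) (Cdiv z1 j) (Cdiv z2 j)).

(* lambda, mu in O_K *)
Definition heis_h (m : nat) (l mu : CC) (phi : CC -> CC -> CC -> CC) : CC -> CC -> CC -> CC :=
  fun t z1 z2 =>
    Cmul (ee (Cmul (Cnat m)
                (Cadd (Cadd (Cmul (RtoC (Nrm l)) t) (Cmul (Cconj l) z1)) (Cmul l z2))))
         (phi t (Cadd z1 (Cadd (Cmul l t) mu))
                (Cadd z2 (Cadd (Cmul (Cconj l) t) (Cconj mu)))).

(* O_K^sharp = (i/2) O_K; its element (i/2)(a + b i) *)
Definition sharp_elt (ab : Z * Z) : CC :=
  Cmul (Cmul Ci (RtoC (1/2))) (Cgauss (fst ab) (snd ab)).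

Definition fourier_h (phi : CC -> CC -> CC -> CC) (c : nat -> Z * Z -> CC) : Prop :=
  forall t z1 z2, inH t ->
    has_usum (fun p : nat * (Z * Z) =>
                let r := sharp_elt (snd p) in
                Cmul (c (fst p) (snd p))
                     (ee (Cadd (Cadd (Cmul (Cnat (fst p)) t) (Cmul r z1))
                               (Cmul (Cconj r) z2))))
             (phi t z1 z2).

Definition HermJacobiForm (k m : nat) (phi : CC -> CC -> CC -> CC) : Prop :=
  holo3 phi
  /\ (forall a b c d, isSL2 a b c d -> forall t z1 z2, inH t ->
        slash_h k m a b c d phi t z1 z2 = phi t z1 z2)
  /\ (forall l1 l2 mu1 mu2 t z1 z2, inH t ->
        heis_h m (Cgauss l1 l2) (Cgauss mu1 mu2) phi t z1 z2 = phi t z1 z2)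
  /\ exists coef : nat -> Z * Z -> CC,
       (forall n ab, ~ (Nrm (sharp_elt ab) <= INR n * INR m) -> coef n ab = C0)
       /\ fourier_h phi coef.

Definition HermJacobiCuspForm (k m : nat) (phi : CC -> CC -> CC -> CC) : Prop :=
  HermJacobiForm k m phi
  /\ forall coef, fourier_h phi coef ->
       forall n ab, Nrm (sharp_elt ab) = INR n * INR m -> coef n ab = C0.

Definition prodF (phi1 phi2 : CC -> CC -> CC) : CC -> CC -> CC -> CC :=
  fun t z1 z2 =>
    Cmul (phi1 t (Cmul (RtoC (1/2)) (Cadd z1 z2)))
         (phi2 t (Cmul (Cmul Ci (RtoC (1/2))) (Csub z1 z2))).

Definition Hmap (k1 k2 : nat) (phi1 phi2 : CC -> CC -> CC) : CC -> CC -> CC -> CC :=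
  fun t z1 z2 =>
    Csum (map (fun eps => slash_unit (k1 + k2) eps (prodF phi1 phi2) t z1 z2) units_OK).

(* Main.v *)
From Stdlib Require Import Reals Lra Lia ZArith List Permutation Classical FunctionalExtensionality.
Require Import Defs.
Import ListNotations.
Open Scope R_scope.

Lemma CC_eq (a b c d : R) : a = c -> b = d -> (a, b) = (c, d).
Proof. intros; subst; reflexivity. Qed.

Ltac cunf := unfold Csub, Cdiv in *; unfold Cmul, Cadd, Copp, Cconj, RtoC, CZ, C0, C1, Ci, Cgauss, Cnat, Nrm in *; unfold Cre, Cim in *; simpl in *.
Ltac cdes := repeat match goal with z : CC |- _ => destruct z end.

Lemma CC_ring : ring_theory C0 C1 Cadd Cmul Csub Copp (@eq CC).
Proof.
  constructor; intros; cdes; cunf; apply CC_eq; ring.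
Qed.
Add Ring CCring : CC_ring.

Lemma Cexp_add x y : Cexp (Cadd x y) = Cmul (Cexp x) (Cexp y).
Proof. cdes; unfold Cexp; cunf; rewrite exp_plus, cos_plus, sin_plus; apply CC_eq; ring. Qed.

Lemma ee_add x y : ee (Cadd x y) = Cmul (ee x) (ee y).
Proof. unfold ee. rewrite <- Cexp_add. f_equal. ring. Qed.

Lemma ee_form a b : ee (a, b) = (exp (-(2*PI*b)) * cos (2*PI*a), exp (-(2*PI*b)) * sin (2*PI*a)).
Proof. unfold ee, Cexp; cunf. apply CC_eq; f_equal; f_equal; ring. Qed.

Lemma ee_0 : ee C0 = C1.
Proof. unfold C0; rewrite ee_form. cunf. replace (2*PI*0) with 0 by ring. replace (-0) with 0 by ring. rewrite exp_0, cos_0, sin_0. apply CC_eq; ring. Qed.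

Lemma ee_opp x : Cmul (ee x) (ee (Copp x)) = C1.
Proof. rewrite <- ee_add. replace (Cadd x (Copp x)) with C0 by ring. apply ee_0. Qed.

Lemma CZ_mul a b : CZ (a * b) = Cmul (CZ a) (CZ b).
Proof. cunf; rewrite mult_IZR; apply CC_eq; ring. Qed.
Lemma CZ_add a b : CZ (a + b) = Cadd (CZ a) (CZ b).
Proof. cunf; rewrite plus_IZR; apply CC_eq; ring. Qed.
Lemma CZ_opp a : CZ (- a) = Copp (CZ a).
Proof. cunf; rewrite opp_IZR; apply CC_eq; ring. Qed.

Lemma Cpow_add z a b : Cpow z (a + b) = Cmul (Cpow z a) (Cpow z b).
Proof. induction a; simpl. ring. rewrite IHa. ring. Qed.

Lemma Nrm_mul z w : Nrm (Cmul z w) = Nrm z * Nrm w.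
Proof. cdes; cunf; ring. Qed.

Lemma Nrm_pos z : z <> C0 -> 0 < Nrm z.
Proof. cdes; cunf; intros H. destruct (Req_dec r 0) as [->|Hr].
  - destruct (Req_dec r0 0) as [->|Hr0]. exfalso; apply H; reflexivity.
    pose proof (Rsqr_pos_lt r0 Hr0). unfold Rsqr in *. nra.
  - pose proof (Rsqr_pos_lt r Hr). unfold Rsqr in *. nra. Qed.

Lemma Nrm_nonneg z : 0 <= Nrm z.
Proof. cdes; cunf; nra. Qed.

Lemma Cmul_neq0 z w : z <> C0 -> w <> C0 -> Cmul z w <> C0.
Proof. intros Hz Hw He. apply Nrm_pos in Hz; apply Nrm_pos in Hw.
  assert (Nrm (Cmul z w) = 0) by (rewrite He; cunf; ring). rewrite Nrm_mul in H. nra. Qed.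

Lemma Cinv_l z : z <> C0 -> Cmul (Cinv z) z = C1.
Proof. intros H; apply Nrm_pos in H. revert H; cdes; unfold Cinv; cunf; intros; apply CC_eq; field; lra. Qed.

Lemma Cinv_mul z w : z <> C0 -> w <> C0 -> Cinv (Cmul z w) = Cmul (Cinv z) (Cinv w).
Proof. intros Hz Hw. pose proof (Cmul_neq0 _ _ Hz Hw) as Hzw.
  apply Nrm_pos in Hz; apply Nrm_pos in Hw. apply Nrm_pos in Hzw. rewrite Nrm_mul in Hzw.
  pose proof (Nrm_mul z w) as E. revert Hz Hw Hzw E. cdes; unfold Cinv; cunf; intros; rewrite E.
  apply CC_eq; field; split; lra. Qed.

Lemma Cpow_neq0 z k : z <> C0 -> Cpow z k <> C0.
Proof. intros H; induction k; simpl. unfold C1, C0; intro E; inversion E; lra. apply Cmul_neq0; auto. Qed.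

Lemma Cinv_C1 : Cinv C1 = C1.
Proof. unfold Cinv; cunf; apply CC_eq; field. Qed.

Lemma ee_neq0 x : ee x <> C0.
Proof. intro H. pose proof (ee_opp x) as E. rewrite H in E. unfold C0, C1, Cmul in E; simpl in E. inversion E. lra. Qed.

Definition Tm (phi1 phi2 : CC -> CC -> CC) (c al be ga de : CC) : CC -> CC -> CC -> CC :=
  fun t z1 z2 => Cmul c (Cmul (phi1 t (Cadd (Cmul al z1) (Cmul be z2)))
                             (phi2 t (Cadd (Cmul ga z1) (Cmul de z2)))).

Lemma j_neq0 a b c d t : isSL2 a b c d -> inH t -> Cadd (Cmul (CZ c) t) (CZ d) <> C0.
Proof.
  unfold isSL2, inH; destruct t as [x y]; unfold Cim; simpl; intros HS Hy E.
  cunf. inversion E as [[E1 E2]].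
  assert (IZR c = 0) by nra. apply eq_IZR in H. subst c.
  assert (IZR d = 0) by lra. apply eq_IZR in H. subst d. lia.
Qed.

Lemma Tm_SL2 k1 k2 m phi1 phi2 c al be ga de :
  (forall z1 z2, Cadd (Cmul (Cadd (Cmul al z1) (Cmul be z2)) (Cadd (Cmul al z1) (Cmul be z2)))
                      (Cmul (Cadd (Cmul ga z1) (Cmul de z2)) (Cadd (Cmul ga z1) (Cmul de z2)))
                 = Cmul z1 z2) ->
  JacobiForm k1 m phi1 -> JacobiForm k2 m phi2 ->
  forall a b cc d, isSL2 a b cc d -> forall t z1 z2, inH t ->
    slash_h (k1+k2) m a b cc d (Tm phi1 phi2 c al be ga de) t z1 z2 = Tm phi1 phi2 c al be ga de t z1 z2.
Proof.
  intros Hw J1 J2 a b cc d HS t z1 z2 Ht.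
  destruct J1 as [_ [S1 _]]. destruct J2 as [_ [S2 _]].
  pose proof (j_neq0 _ _ _ _ _ HS Ht) as Hj.
  unfold slash_h, Tm.
  set (w1 := Cadd (Cmul al z1) (Cmul be z2)).
  set (w2 := Cadd (Cmul ga z1) (Cmul de z2)).
  rewrite <- (S1 a b cc d HS t w1 Ht), <- (S2 a b cc d HS t w2 Ht).
  unfold slash_cl.
  set (j := Cadd (Cmul (CZ cc) t) (CZ d)).
  replace (Cadd (Cmul al (Cdiv z1 j)) (Cmul be (Cdiv z2 j))) with (Cdiv w1 j) by (unfold w1, Cdiv; ring).
  replace (Cadd (Cmul ga (Cdiv z1 j)) (Cmul de (Cdiv z2 j))) with (Cdiv w2 j) by (unfold w2, Cdiv; ring).
  replace (Copp (Cdiv (Cmul (Cmul (Cnat m) (CZ cc)) (Cmul z1 z2)) j)) with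
     (Cadd (Copp (Cdiv (Cmul (Cmul (Cnat m) (CZ cc)) (Cmul w1 w1)) j))
           (Copp (Cdiv (Cmul (Cmul (Cnat m) (CZ cc)) (Cmul w2 w2)) j)))
    by (unfold Cdiv; rewrite <- (Hw z1 z2); fold w1 w2; ring).
  rewrite ee_add, Cpow_add, Cinv_mul by (apply Cpow_neq0; exact Hj).
  ring.
Qed.

Lemma Tm_heis k1 k2 m phi1 phi2 c al be ga de (l mu : CC) (A B C D : Z) :
  Cadd (Cmul al l) (Cmul be (Cconj l)) = CZ A ->
  Cadd (Cmul al mu) (Cmul be (Cconj mu)) = CZ B ->
  Cadd (Cmul ga l) (Cmul de (Cconj l)) = CZ C ->
  Cadd (Cmul ga mu) (Cmul de (Cconj mu)) = CZ D ->
  (forall t z1 z2, Cmul (Cnat m) (Cadd (Cadd (Cmul (RtoC (Nrm l)) t) (Cmul (Cconj l) z1)) (Cmul l z2))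
     = Cadd (Cmul (Cnat m) (Cadd (Cmul (CZ (A*A)) t) (Cmul (CZ (2*A)) (Cadd (Cmul al z1) (Cmul be z2)))))
            (Cmul (Cnat m) (Cadd (Cmul (CZ (C*C)) t) (Cmul (CZ (2*C)) (Cadd (Cmul ga z1) (Cmul de z2)))))) ->
  JacobiForm k1 m phi1 -> JacobiForm k2 m phi2 ->
  forall t z1 z2, inH t ->
    heis_h m l mu (Tm phi1 phi2 c al be ga de) t z1 z2 = Tm phi1 phi2 c al be ga de t z1 z2.
Proof.
  intros HA HB HC HD HE J1 J2 t z1 z2 Ht.
  destruct J1 as [_ [_ [H1 _]]]. destruct J2 as [_ [_ [H2 _]]].
  unfold heis_h, Tm.
  set (w1 := Cadd (Cmul al z1) (Cmul be z2)).
  set (w2 := Cadd (Cmul ga z1) (Cmul de z2)).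
  rewrite <- (H1 A B t w1 Ht), <- (H2 C D t w2 Ht). unfold heis_cl.
  replace (Cadd (Cmul al (Cadd z1 (Cadd (Cmul l t) mu))) (Cmul be (Cadd z2 (Cadd (Cmul (Cconj l) t) (Cconj mu)))))
    with (Cadd w1 (Cadd (Cmul (CZ A) t) (CZ B))) by (rewrite <- HA, <- HB; unfold w1; ring).
  replace (Cadd (Cmul ga (Cadd z1 (Cadd (Cmul l t) mu))) (Cmul de (Cadd z2 (Cadd (Cmul (Cconj l) t) (Cconj mu)))))
    with (Cadd w2 (Cadd (Cmul (CZ C) t) (CZ D))) by (rewrite <- HC, <- HD; unfold w2; ring).
  rewrite HE, ee_add. fold w1 w2. ring.
Qed.

Definition Hsum (phi1 phi2 : CC -> CC -> CC) (k : nat) : CC -> CC -> CC -> CC :=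
  fun t z1 z2 =>
    Cadd (Tm phi1 phi2 (Cinv (Cpow C1 k)) (1/2, 0) (1/2, 0) (0, 1/2) (0, -(1/2)) t z1 z2)
   (Cadd (Tm phi1 phi2 (Cinv (Cpow (Copp C1) k)) (-(1/2), 0) (-(1/2), 0) (0, -(1/2)) (0, 1/2) t z1 z2)
   (Cadd (Tm phi1 phi2 (Cinv (Cpow Ci k)) (0, 1/2) (0, -(1/2)) (-(1/2), 0) (-(1/2), 0) t z1 z2)
   (Cadd (Tm phi1 phi2 (Cinv (Cpow (Copp Ci) k)) (0, -(1/2)) (0, 1/2) (1/2, 0) (1/2, 0) t z1 z2) C0))).

Lemma phi_arg (phi : CC -> CC -> CC) t x y : x = y -> phi t x = phi t y.
Proof. intros ->; reflexivity. Qed.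

Ltac argeq := apply phi_arg; cdes; cunf; apply CC_eq; field.

Lemma Hmap_eq k1 k2 phi1 phi2 : Hmap k1 k2 phi1 phi2 = Hsum phi1 phi2 (k1 + k2).
Proof.
  apply functional_extensionality; intro t. apply functional_extensionality; intro z1.
  apply functional_extensionality; intro z2.
  unfold Hmap, Hsum, units_OK, Tm, slash_unit, prodF. simpl.
  repeat (apply f_equal2; [apply f_equal2; [reflexivity| apply f_equal2; argeq]|]); reflexivity.
Qed.

Ltac zeq := repeat rewrite ?CZ_mul, ?CZ_opp; cdes; cunf; apply CC_eq; repeat rewrite ?mult_IZR, ?opp_IZR, ?plus_IZR; field.

Lemma Hsum_SL2 k1 k2 m phi1 phi2 :
  JacobiForm k1 m phi1 -> JacobiForm k2 m phi2 ->
  forall a b cc d, isSL2 a b cc d -> forall t z1 z2, inH t ->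
    slash_h (k1+k2) m a b cc d (Hsum phi1 phi2 (k1+k2)) t z1 z2 = Hsum phi1 phi2 (k1+k2) t z1 z2.
Proof.
  intros J1 J2 a b cc d HS t z1 z2 Ht. unfold Hsum.
  rewrite <- (Tm_SL2 k1 k2 m phi1 phi2 (Cinv (Cpow C1 (k1+k2))) (1/2, 0) (1/2, 0) (0, 1/2) (0, -(1/2)) ltac:(intros; zeq) J1 J2 a b cc d HS t z1 z2 Ht).
  rewrite <- (Tm_SL2 k1 k2 m phi1 phi2 (Cinv (Cpow (Copp C1) (k1+k2))) (-(1/2), 0) (-(1/2), 0) (0, -(1/2)) (0, 1/2) ltac:(intros; zeq) J1 J2 a b cc d HS t z1 z2 Ht).
  rewrite <- (Tm_SL2 k1 k2 m phi1 phi2 (Cinv (Cpow Ci (k1+k2))) (0, 1/2) (0, -(1/2)) (-(1/2), 0) (-(1/2), 0) ltac:(intros; zeq) J1 J2 a b cc d HS t z1 z2 Ht).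
  rewrite <- (Tm_SL2 k1 k2 m phi1 phi2 (Cinv (Cpow (Copp Ci) (k1+k2))) (0, -(1/2)) (0, 1/2) (1/2, 0) (1/2, 0) ltac:(intros; zeq) J1 J2 a b cc d HS t z1 z2 Ht).
  unfold slash_h. ring.
Qed.

Lemma Hsum_heis k1 k2 m phi1 phi2 :
  JacobiForm k1 m phi1 -> JacobiForm k2 m phi2 ->
  forall l1 l2 mu1 mu2 t z1 z2, inH t ->
    heis_h m (Cgauss l1 l2) (Cgauss mu1 mu2) (Hsum phi1 phi2 (k1+k2)) t z1 z2 = Hsum phi1 phi2 (k1+k2) t z1 z2.
Proof.
  intros J1 J2 l1 l2 mu1 mu2 t z1 z2 Ht. unfold Hsum.
  rewrite <- (Tm_heis k1 k2 m phi1 phi2 (Cinv (Cpow C1 (k1+k2))) (1/2, 0) (1/2, 0) (0, 1/2) (0, -(1/2)) (Cgauss l1 l2) (Cgauss mu1 mu2) l1 mu1 (-l2) (-mu2)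
     ltac:(zeq) ltac:(zeq) ltac:(zeq) ltac:(zeq) ltac:(intros; zeq) J1 J2 t z1 z2 Ht).
  rewrite <- (Tm_heis k1 k2 m phi1 phi2 (Cinv (Cpow (Copp C1) (k1+k2))) (-(1/2), 0) (-(1/2), 0) (0, -(1/2)) (0, 1/2) (Cgauss l1 l2) (Cgauss mu1 mu2) (-l1) (-mu1) l2 mu2
     ltac:(zeq) ltac:(zeq) ltac:(zeq) ltac:(zeq) ltac:(intros; zeq) J1 J2 t z1 z2 Ht).
  rewrite <- (Tm_heis k1 k2 m phi1 phi2 (Cinv (Cpow Ci (k1+k2))) (0, 1/2) (0, -(1/2)) (-(1/2), 0) (-(1/2), 0) (Cgauss l1 l2) (Cgauss mu1 mu2) (-l2) (-mu2) (-l1) (-mu1)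
     ltac:(zeq) ltac:(zeq) ltac:(zeq) ltac:(zeq) ltac:(intros; zeq) J1 J2 t z1 z2 Ht).
  rewrite <- (Tm_heis k1 k2 m phi1 phi2 (Cinv (Cpow (Copp Ci) (k1+k2))) (0, -(1/2)) (0, 1/2) (1/2, 0) (1/2, 0) (Cgauss l1 l2) (Cgauss mu1 mu2) l2 mu2 l1 mu1
     ltac:(zeq) ltac:(zeq) ltac:(zeq) ltac:(zeq) ltac:(intros; zeq) J1 J2 t z1 z2 Ht).
  unfold heis_h. ring.
Qed.

Lemma Cnorm_nonneg z : 0 <= Cnorm z.
Proof. unfold Cnorm; apply sqrt_pos. Qed.

Lemma Cnorm_mul z w : Cnorm (Cmul z w) = Cnorm z * Cnorm w.
Proof. unfold Cnorm. rewrite Nrm_mul. apply sqrt_mult; apply Nrm_nonneg. Qed.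

Lemma Cnorm_add z w : Cnorm (Cadd z w) <= Cnorm z + Cnorm w.
Proof.
  unfold Cnorm.
  pose proof (sqrt_pos (Nrm z)); pose proof (sqrt_pos (Nrm w)).
  rewrite <- (sqrt_square (sqrt (Nrm z) + sqrt (Nrm w))) by lra.
  apply sqrt_le_1_alt.
  replace ((sqrt (Nrm z) + sqrt (Nrm w)) * (sqrt (Nrm z) + sqrt (Nrm w)))
    with (Nrm z + Nrm w + 2 * sqrt (Nrm z * Nrm w))
    by (rewrite sqrt_mult by apply Nrm_nonneg; rewrite <- (sqrt_sqrt (Nrm z)) at 1 by apply Nrm_nonneg;
        rewrite <- (sqrt_sqrt (Nrm w)) at 1 by apply Nrm_nonneg; ring).
  assert (HC : Cre z * Cre w + Cim z * Cim w <= sqrt (Nrm z * Nrm w)).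
  { destruct (Rle_dec (Cre z * Cre w + Cim z * Cim w) 0). pose proof (sqrt_pos (Nrm z * Nrm w)); lra.
    rewrite <- (sqrt_square (Cre z * Cre w + Cim z * Cim w)) by lra.
    apply sqrt_le_1_alt. unfold Nrm. destruct z as [a b], w as [c d]; unfold Cre, Cim in *; simpl in *.
    pose proof (Rle_0_sqr (a*d - b*c)). unfold Rsqr in *. nra. }
  destruct z, w; unfold Nrm, Cadd, Cre, Cim in *; simpl in *. nra.
Qed.

Lemma Cnorm_opp z : Cnorm (Copp z) = Cnorm z.
Proof. unfold Cnorm; f_equal; cdes; cunf; ring. Qed.

Lemma Cnorm_sub_sym a b : Cnorm (Csub a b) = Cnorm (Csub b a).
Proof. replace (Csub a b) with (Copp (Csub b a)) by ring. apply Cnorm_opp. Qed.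

Lemma Cnorm_C0 : Cnorm C0 = 0.
Proof. unfold Cnorm; cunf. replace (0*0+0*0) with 0 by ring. apply sqrt_0. Qed.

Lemma Cnorm_pos z : z <> C0 -> 0 < Cnorm z.
Proof. intro H; unfold Cnorm; apply sqrt_lt_R0; apply Nrm_pos; auto. Qed.

Lemma Cnorm_eq0 z : Cnorm z = 0 -> z = C0.
Proof. intro H. destruct (classic (z = C0)); auto. apply Cnorm_pos in H0; lra. Qed.

Lemma Cnorm_RtoC x : Cnorm (RtoC x) = Rabs x.
Proof. unfold Cnorm; cunf. replace (x*x+0*0) with (x*x) by ring. rewrite <- Rsqr_def. apply sqrt_Rsqr_abs. Qed.

Lemma Cnorm_re z : Rabs (Cre z) <= Cnorm z.
Proof. unfold Cnorm, Nrm. rewrite <- sqrt_Rsqr_abs. apply sqrt_le_1_alt. unfold Rsqr. pose proof (Rle_0_sqr (Cim z)). unfold Rsqr in *. lra. Qed.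
Lemma Cnorm_im z : Rabs (Cim z) <= Cnorm z.
Proof. unfold Cnorm, Nrm. rewrite <- sqrt_Rsqr_abs. apply sqrt_le_1_alt. unfold Rsqr. pose proof (Rle_0_sqr (Cre z)). unfold Rsqr in *. lra. Qed.
Lemma Cnorm_le_reim z : Cnorm z <= Rabs (Cre z) + Rabs (Cim z).
Proof.
  pose proof (Rabs_pos (Cre z)); pose proof (Rabs_pos (Cim z)).
  unfold Cnorm. rewrite <- (sqrt_square (Rabs (Cre z) + Rabs (Cim z))) by lra.
  apply sqrt_le_1_alt. unfold Nrm.
  pose proof (Rsqr_abs (Cre z)); pose proof (Rsqr_abs (Cim z)). unfold Rsqr in *. nra.
Qed.

Lemma Cnorm_inv z : z <> C0 -> Cnorm (Cinv z) = / Cnorm z.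
Proof.
  intro H. pose proof (Cinv_l z H) as E. pose proof (Cnorm_pos z H).
  assert (Cnorm (Cinv z) * Cnorm z = 1).
  { rewrite <- Cnorm_mul, E. replace C1 with (RtoC 1) by reflexivity. rewrite Cnorm_RtoC. apply Rabs_R1. }
  field_simplify_eq; lra.
Qed.

Lemma Cnorm_triangle a b c : Cnorm (Csub a c) <= Cnorm (Csub a b) + Cnorm (Csub b c).
Proof. replace (Csub a c) with (Cadd (Csub a b) (Csub b c)) by ring. apply Cnorm_add. Qed.

Lemma Cnorm_sub_le a b : Cnorm a <= Cnorm b + Cnorm (Csub a b).
Proof. replace a with (Cadd b (Csub a b)) at 1 by ring. apply Cnorm_add. Qed.

Lemma prod_bound x x' y y' :
  Cnorm (Csub (Cmul x' y') (Cmul x y)) <=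
  Cnorm (Csub x' x) * (Cnorm y + Cnorm (Csub y' y)) + Cnorm x * Cnorm (Csub y' y).
Proof.
  replace (Csub (Cmul x' y') (Cmul x y)) with (Cadd (Cmul (Csub x' x) y') (Cmul x (Csub y' y))) by ring.
  eapply Rle_trans. apply Cnorm_add. rewrite !Cnorm_mul.
  pose proof (Cnorm_sub_le y' y). pose proof (Cnorm_nonneg (Csub x' x)).
  apply Rplus_le_compat_r. apply Rmult_le_compat_l; auto.
Qed.

Definition cont3at (f : CC -> CC -> CC -> CC) t z1 z2 : Prop :=
  forall eps, 0 < eps -> exists delta, 0 < delta /\
    forall t' z1' z2', Cnorm (Csub t' t) < delta -> Cnorm (Csub z1' z1) < delta ->
      Cnorm (Csub z2' z2) < delta -> Cnorm (Csub (f t' z1' z2') (f t z1 z2)) < eps.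

Lemma cont3_const c t z1 z2 : cont3at (fun _ _ _ => c) t z1 z2.
Proof. intros eps He. exists 1; split; [lra|]. intros. replace (Csub c c) with C0 by ring. rewrite Cnorm_C0; lra. Qed.

Lemma cont3_add f g t z1 z2 : cont3at f t z1 z2 -> cont3at g t z1 z2 ->
  cont3at (fun a b c => Cadd (f a b c) (g a b c)) t z1 z2.
Proof.
  intros Hf Hg eps He. destruct (Hf (eps/2) ltac:(lra)) as [d1 [Hd1 H1]].
  destruct (Hg (eps/2) ltac:(lra)) as [d2 [Hd2 H2]].
  exists (Rmin d1 d2); split. apply Rmin_pos; auto.
  intros t' a b Ht Ha Hb.
  pose proof (Rmin_l d1 d2); pose proof (Rmin_r d1 d2).
  specialize (H1 t' a b ltac:(lra) ltac:(lra) ltac:(lra)). specialize (H2 t' a b ltac:(lra) ltac:(lra) ltac:(lra)).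
  replace (Csub (Cadd (f t' a b) (g t' a b)) (Cadd (f t z1 z2) (g t z1 z2)))
    with (Cadd (Csub (f t' a b) (f t z1 z2)) (Csub (g t' a b) (g t z1 z2))) by ring.
  eapply Rle_lt_trans. apply Cnorm_add. lra.
Qed.

Lemma mul_small (a b F c A C G : R) : 0 <= a -> a < A -> 0 <= b -> b <= G + 1 -> 0 <= G ->
  0 <= F -> 0 <= c -> c < C -> A * (G + 1) <= 1 -> F * C <= 1 -> 0 < A ->
  a * b + F * c < 2.
Proof. intros. assert (a * b <= A * (G+1)) by (apply Rmult_le_compat; lra).
  assert (F * c <= F * C) by (apply Rmult_le_compat_l; lra). nra. Qed.

Lemma cont3_mul f g t z1 z2 : cont3at f t z1 z2 -> cont3at g t z1 z2 ->
  cont3at (fun a b c => Cmul (f a b c) (g a b c)) t z1 z2.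
Proof.
  intros Hf Hg eps He.
  set (F := Cnorm (f t z1 z2)). set (G := Cnorm (g t z1 z2)).
  assert (HF : 0 <= F) by apply Cnorm_nonneg. assert (HG : 0 <= G) by apply Cnorm_nonneg.
  destruct (Hf (eps / (2 * (G+1))) ltac:(apply Rdiv_lt_0_compat; lra)) as [d1 [Hd1 H1]].
  destruct (Hg (Rmin 1 (eps / (2 * (F+1)))) ltac:(apply Rmin_pos; [lra| apply Rdiv_lt_0_compat; lra])) as [d2 [Hd2 H2]].
  exists (Rmin d1 d2); split. apply Rmin_pos; auto.
  intros t' a b Ht Ha Hb.
  pose proof (Rmin_l d1 d2); pose proof (Rmin_r d1 d2).
  specialize (H1 t' a b ltac:(lra) ltac:(lra) ltac:(lra)). specialize (H2 t' a b ltac:(lra) ltac:(lra) ltac:(lra)).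
  pose proof (Rmin_l 1 (eps / (2 * (F+1)))); pose proof (Rmin_r 1 (eps / (2 * (F+1)))).
  eapply Rle_lt_trans. apply prod_bound. fold F G.
  set (a0 := Cnorm (Csub (f t' a b) (f t z1 z2))). set (c0 := Cnorm (Csub (g t' a b) (g t z1 z2))).
  assert (0 <= a0) by apply Cnorm_nonneg. assert (0 <= c0) by apply Cnorm_nonneg.
  assert (HA0 : a0 < eps / (2*(G+1))) by exact H1. assert (HC0 : c0 < Rmin 1 (eps / (2*(F+1)))) by exact H2.
  pose proof (mul_small (2*a0/eps) (G + c0) F (2*c0/eps) (2*(eps / (2 * (G+1)))/eps) (2*(eps / (2 * (F+1)))/eps) G) as HMS.
  assert (E1 : 2 * (eps / (2 * (G + 1))) / eps * (G + 1) = 1) by (field; lra).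
  assert (E2 : F * (2 * (eps / (2 * (F + 1))) / eps) <= 1).
  { replace (F * (2 * (eps / (2 * (F + 1))) / eps)) with (F / (F+1)) by (field; lra).
    apply Rmult_le_reg_r with (F+1); [lra|]. unfold Rdiv; rewrite Rmult_assoc, Rinv_l by lra. lra. }
  assert (HX : 2 * a0 / eps * (G + c0) + F * (2 * c0 / eps) < 2).
  { unfold Rdiv in *. assert (0 < /eps) by (apply Rinv_0_lt_compat; lra).
    assert (0 <= 2*a0/eps) by (unfold Rdiv; apply Rmult_le_pos; lra).
    assert (0 <= 2*c0/eps) by (unfold Rdiv; apply Rmult_le_pos; lra).
    assert (2*a0/eps < 2*(eps / (2 * (G+1)))/eps) by (unfold Rdiv; apply Rmult_lt_compat_r; lra).
    assert (2*c0/eps < 2*(eps / (2 * (F+1)))/eps) by (unfold Rdiv; apply Rmult_lt_compat_r; lra).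
    assert (0 < 2*(eps / (2 * (G+1)))/eps) by (unfold Rdiv; apply Rmult_lt_0_compat; [|lra]; apply Rmult_lt_0_compat; [lra|]; apply Rmult_lt_0_compat; [lra|]; apply Rinv_0_lt_compat; lra).
    apply HMS; lra. }
  replace (2 * a0 / eps * (G + c0) + F * (2 * c0 / eps)) with (2/eps * (a0 * (G + c0) + F * c0)) in HX by (field; lra).
  apply Rmult_lt_compat_l with (r := eps/2) in HX; [|lra].
  replace (eps / 2 * (2 / eps * (a0 * (G + c0) + F * c0))) with (a0 * (G + c0) + F * c0) in HX by (field; lra).
  lra.
Qed.

Lemma cont3_comp (phi : CC -> CC -> CC) al be t z1 z2 : holo2 phi -> inH t ->
  cont3at (fun a b c => phi a (Cadd (Cmul al b) (Cmul be c))) t z1 z2.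
Proof.
  intros [Hc _] Ht eps He.
  destruct (Hc t (Cadd (Cmul al z1) (Cmul be z2)) Ht eps He) as [d [Hd H]].
  set (K := Cnorm al + Cnorm be + 1).
  assert (HK : 1 <= K) by (unfold K; pose proof (Cnorm_nonneg al); pose proof (Cnorm_nonneg be); lra).
  exists (d / K); split. apply Rdiv_lt_0_compat; lra.
  intros t' a b Ht' Ha Hb.
  assert (d / K <= d). { apply Rmult_le_reg_r with K; [lra|]. unfold Rdiv; rewrite Rmult_assoc, Rinv_l by lra. nra. }
  apply H. lra.
  replace (Csub (Cadd (Cmul al a) (Cmul be b)) (Cadd (Cmul al z1) (Cmul be z2)))
    with (Cadd (Cmul al (Csub a z1)) (Cmul be (Csub b z2))) by ring.
  eapply Rle_lt_trans. apply Cnorm_add. rewrite !Cnorm_mul.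
  pose proof (Cnorm_nonneg al); pose proof (Cnorm_nonneg be).
  assert (Cnorm al * Cnorm (Csub a z1) <= Cnorm al * (d/K)) by (apply Rmult_le_compat_l; lra).
  assert (Cnorm be * Cnorm (Csub b z2) <= Cnorm be * (d/K)) by (apply Rmult_le_compat_l; lra).
  assert ((Cnorm al + Cnorm be) * (d/K) < d).
  { replace (Cnorm al + Cnorm be) with (K - 1) by (unfold K; ring).
    replace ((K - 1) * (d / K)) with (d - d/K) by (field; lra).
    pose proof (Rdiv_lt_0_compat d K Hd ltac:(lra)). lra. }
  lra.
Qed.

Lemma Cnorm_pos_neq h : 0 < Cnorm h -> h <> C0.
Proof. intros H E; subst; rewrite Cnorm_C0 in H; lra. Qed.

Lemma Cdiff_ext g g' a : (forall x, g x = g' x) -> Cdiff_at g a -> Cdiff_at g' a.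
Proof. intros E H. assert (g = g') by (apply functional_extensionality; auto). subst; auto. Qed.

Lemma Cdiff_const c a : Cdiff_at (fun _ => c) a.
Proof. exists C0. intros eps He. exists 1; split; [lra|]. intros h Hh.
  replace (Csub (Cdiv (Csub c c) h) C0) with C0 by (unfold Cdiv; ring). rewrite Cnorm_C0; lra. Qed.

Lemma Cdiff_add f g a : Cdiff_at f a -> Cdiff_at g a -> Cdiff_at (fun x => Cadd (f x) (g x)) a.
Proof.
  intros [lf Hf] [lg Hg]. exists (Cadd lf lg). intros eps He.
  destruct (Hf (eps/2) ltac:(lra)) as [d1 [Hd1 H1]]. destruct (Hg (eps/2) ltac:(lra)) as [d2 [Hd2 H2]].
  exists (Rmin d1 d2); split. apply Rmin_pos; auto. intros h Hh.
  pose proof (Rmin_l d1 d2); pose proof (Rmin_r d1 d2).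
  specialize (H1 h ltac:(lra)); specialize (H2 h ltac:(lra)).
  replace (Csub (Cdiv (Csub (Cadd (f (Cadd a h)) (g (Cadd a h))) (Cadd (f a) (g a))) h) (Cadd lf lg))
    with (Cadd (Csub (Cdiv (Csub (f (Cadd a h)) (f a)) h) lf) (Csub (Cdiv (Csub (g (Cadd a h)) (g a)) h) lg))
    by (unfold Cdiv; ring).
  eapply Rle_lt_trans. apply Cnorm_add. lra.
Qed.

Lemma Cdiff_scale c g a : Cdiff_at g a -> Cdiff_at (fun x => Cmul c (g x)) a.
Proof.
  intros [l Hg]. exists (Cmul c l). intros eps He.
  destruct (Hg (eps / (Cnorm c + 1))) as [d [Hd H]]. apply Rdiv_lt_0_compat; [lra|]. pose proof (Cnorm_nonneg c); lra.
  exists d; split; auto. intros h Hh. specialize (H h Hh).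
  replace (Csub (Cdiv (Csub (Cmul c (g (Cadd a h))) (Cmul c (g a))) h) (Cmul c l))
    with (Cmul c (Csub (Cdiv (Csub (g (Cadd a h)) (g a)) h) l)) by (unfold Cdiv; ring).
  rewrite Cnorm_mul. pose proof (Cnorm_nonneg c).
  set (x := Cnorm (Csub (Cdiv (Csub (g (Cadd a h)) (g a)) h) l)) in *.
  assert (0 <= x) by apply Cnorm_nonneg.
  assert (Cnorm c * x <= Cnorm c * (eps / (Cnorm c + 1))) by (apply Rmult_le_compat_l; lra).
  assert (Cnorm c * (eps / (Cnorm c + 1)) < eps).
  { replace (Cnorm c * (eps / (Cnorm c + 1))) with (eps - eps / (Cnorm c + 1)) by (field; lra).
    pose proof (Rdiv_lt_0_compat eps (Cnorm c + 1) He ltac:(lra)). lra. }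
  lra.
Qed.

Lemma quot_mul D h : h <> C0 -> D = Cmul (Cdiv D h) h.
Proof. intro Hh. unfold Cdiv. replace (Cmul (Cmul D (Cinv h)) h) with (Cmul D (Cmul (Cinv h) h)) by ring.
  rewrite Cinv_l by auto. ring. Qed.

Lemma Cdiff_lip g a : Cdiff_at g a -> exists d K, 0 < d /\ 0 <= K /\
  forall h, 0 < Cnorm h < d -> Cnorm (Csub (g (Cadd a h)) (g a)) <= K * Cnorm h.
Proof.
  intros [l Hg]. destruct (Hg 1 ltac:(lra)) as [d [Hd H]].
  exists d, (Cnorm l + 1). split; auto. split. pose proof (Cnorm_nonneg l); lra.
  intros h Hh. specialize (H h Hh).
  rewrite (quot_mul (Csub (g (Cadd a h)) (g a)) h) by (apply Cnorm_pos_neq; lra).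
  rewrite Cnorm_mul. apply Rmult_le_compat_r. apply Cnorm_nonneg.
  pose proof (Cnorm_sub_le (Cdiv (Csub (g (Cadd a h)) (g a)) h) l). lra.
Qed.

Lemma small_prod x y e M : 0 <= x -> x < e / (3 * (M + 1)) -> 0 <= y -> y <= M -> 0 < e -> x * y < e / 3.
Proof.
  intros. assert (x * y <= x * (M + 1)) by (apply Rmult_le_compat_l; lra).
  assert (x * (M + 1) < e / (3 * (M + 1)) * (M + 1)) by (apply Rmult_lt_compat_r; lra).
  replace (e / (3 * (M + 1)) * (M + 1)) with (e / 3) in H5 by (field; lra). lra.
Qed.

Lemma pos_div3 e M : 0 < e -> 0 <= M -> 0 < e / (3 * (M + 1)).
Proof. intros. apply Rdiv_lt_0_compat; lra. Qed.

Lemma Cdiff_mul f g a : Cdiff_at f a -> Cdiff_at g a -> Cdiff_at (fun x => Cmul (f x) (g x)) a.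
Proof.
  intros Df Dg. destruct (Cdiff_lip g a Dg) as [dg [K [Hdg [HK Hlip]]]].
  destruct Df as [lf Hf]. destruct Dg as [lg Hg].
  exists (Cadd (Cmul lf (g a)) (Cmul (f a) lg)). intros eps He.
  set (G := Cnorm (g a)). set (F := Cnorm (f a)). set (L := Cnorm lf).
  assert (HG0 : 0 <= G) by apply Cnorm_nonneg. assert (HF0 : 0 <= F) by apply Cnorm_nonneg. assert (HL0 : 0 <= L) by apply Cnorm_nonneg.
  destruct (Hf (eps / (3 * ((G + K) + 1))) ltac:(apply pos_div3; lra)) as [d1 [Hd1 H1]].
  destruct (Hg (eps / (3 * (F + 1))) ltac:(apply pos_div3; lra)) as [d2 [Hd2 H2]].
  assert (HLK : 0 <= L * K) by (apply Rmult_le_pos; lra).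
  set (d3 := eps / (3 * (L * K + 1))). assert (Hd3 : 0 < d3) by (apply pos_div3; lra).
  exists (Rmin (Rmin d1 d2) (Rmin (Rmin dg 1) d3)). split.
  { repeat apply Rmin_pos; lra. }
  intros h Hh.
  pose proof (Rmin_l (Rmin d1 d2) (Rmin (Rmin dg 1) d3)) as M1; pose proof (Rmin_r (Rmin d1 d2) (Rmin (Rmin dg 1) d3)) as M2.
  pose proof (Rmin_l d1 d2) as M3; pose proof (Rmin_r d1 d2) as M4; pose proof (Rmin_l (Rmin dg 1) d3) as M5;
  pose proof (Rmin_r (Rmin dg 1) d3) as M6; pose proof (Rmin_l dg 1) as M7; pose proof (Rmin_r dg 1) as M8.
  specialize (H1 h ltac:(lra)); specialize (H2 h ltac:(lra)); specialize (Hlip h ltac:(lra)).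
  set (Qf := Cdiv (Csub (f (Cadd a h)) (f a)) h) in *.
  set (Qg := Cdiv (Csub (g (Cadd a h)) (g a)) h) in *.
  replace (Csub (Cdiv (Csub (Cmul (f (Cadd a h)) (g (Cadd a h))) (Cmul (f a) (g a))) h) (Cadd (Cmul lf (g a)) (Cmul (f a) lg)))
    with (Cadd (Cmul (Csub Qf lf) (g (Cadd a h))) (Cadd (Cmul lf (Csub (g (Cadd a h)) (g a))) (Cmul (f a) (Csub Qg lg))))
    by (unfold Qf, Qg, Cdiv; ring).
  eapply Rle_lt_trans. apply Cnorm_add. eapply Rle_lt_trans. apply Rplus_le_compat_l. apply Cnorm_add.
  rewrite !Cnorm_mul. fold F L.
  assert (T1 : Cnorm (Csub Qf lf) * Cnorm (g (Cadd a h)) < eps / 3).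
  { apply small_prod with (M := G + K); try lra. apply Cnorm_nonneg. apply Cnorm_nonneg.
    pose proof (Cnorm_sub_le (g (Cadd a h)) (g a)) as M9. fold G in M9.
    assert (K * Cnorm h <= K * 1) by (apply Rmult_le_compat_l; lra). lra. }
  assert (T2 : L * Cnorm (Csub (g (Cadd a h)) (g a)) < eps / 3).
  { assert (L * Cnorm (Csub (g (Cadd a h)) (g a)) <= L * (K * Cnorm h)) by (apply Rmult_le_compat_l; lra).
    assert (Cnorm h * (L * K) < eps / 3). { pose proof (Cnorm_nonneg h). apply small_prod with (M := L * K); try lra. change (eps / (3 * (L * K + 1))) with d3; lra. }
    nra. }
  assert (T3 : F * Cnorm (Csub Qg lg) < eps / 3).
  { rewrite Rmult_comm. apply small_prod with (M := F); try lra. apply Cnorm_nonneg. }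
  lra.
Qed.

Lemma Cdiff_affine g al b a : al <> C0 -> Cdiff_at g (Cadd (Cmul al a) b) ->
  Cdiff_at (fun w => g (Cadd (Cmul al w) b)) a.
Proof.
  intros Hal [l Hg]. exists (Cmul al l). intros eps He.
  set (N := Cnorm al). assert (HN : 0 < N) by (apply Cnorm_pos; auto).
  destruct (Hg (eps / (N + 1)) ltac:(apply Rdiv_lt_0_compat; lra)) as [d [Hd H]].
  exists (d / N); split. apply Rdiv_lt_0_compat; lra.
  intros h Hh. assert (hne : h <> C0) by (apply Cnorm_pos_neq; lra).
  assert (Hh' : 0 < Cnorm (Cmul al h) < d).
  { rewrite Cnorm_mul. fold N. split. apply Rmult_lt_0_compat; lra.
    destruct Hh as [_ Hh]. apply Rmult_lt_compat_l with (r := N) in Hh; auto.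
    replace (N * (d / N)) with d in Hh by (field; lra). lra. }
  specialize (H _ Hh').
  replace (Cadd (Cmul al (Cadd a h)) b) with (Cadd (Cadd (Cmul al a) b) (Cmul al h)) by ring.
  replace (Csub (Cdiv (Csub (g (Cadd (Cadd (Cmul al a) b) (Cmul al h))) (g (Cadd (Cmul al a) b))) h) (Cmul al l))
    with (Cmul al (Csub (Cdiv (Csub (g (Cadd (Cadd (Cmul al a) b) (Cmul al h))) (g (Cadd (Cmul al a) b))) (Cmul al h)) l)).
  2: { unfold Cdiv. rewrite Cinv_mul by auto.
       replace (Cmul al (Csub (Cmul (Csub (g (Cadd (Cadd (Cmul al a) b) (Cmul al h))) (g (Cadd (Cmul al a) b))) (Cmul (Cinv al) (Cinv h))) l))
         with (Csub (Cmul (Csub (g (Cadd (Cadd (Cmul al a) b) (Cmul al h))) (g (Cadd (Cmul al a) b))) (Cmul (Cmul (Cinv al) al) (Cinv h))) (Cmul al l)) by ring.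
       rewrite Cinv_l by auto. ring. }
  rewrite Cnorm_mul. fold N.
  set (x := Cnorm (Csub (Cdiv (Csub (g (Cadd (Cadd (Cmul al a) b) (Cmul al h))) (g (Cadd (Cmul al a) b))) (Cmul al h)) l)) in *.
  assert (0 <= x) by apply Cnorm_nonneg.
  assert (N * x <= N * (eps / (N + 1))) by (apply Rmult_le_compat_l; lra).
  replace (N * (eps / (N + 1))) with (eps - eps / (N+1)) in H1 by (field; lra).
  pose proof (Rdiv_lt_0_compat eps (N + 1) He ltac:(lra)). lra.
Qed.

Lemma holo3_Tm phi1 phi2 c al be ga de : holo2 phi1 -> holo2 phi2 ->
  al <> C0 -> be <> C0 -> ga <> C0 -> de <> C0 -> holo3 (Tm phi1 phi2 c al be ga de).
Proof.
  intros H1 H2 Ha Hb Hg Hd. split.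
  - intros t z1 z2 Ht.
    exact (cont3_mul (fun _ _ _ => c) (fun a b c' => Cmul (phi1 a (Cadd (Cmul al b) (Cmul be c'))) (phi2 a (Cadd (Cmul ga b) (Cmul de c'))))
      t z1 z2 (cont3_const c t z1 z2)
      (cont3_mul _ _ t z1 z2 (cont3_comp phi1 al be t z1 z2 H1 Ht) (cont3_comp phi2 ga de t z1 z2 H2 Ht))).
  - intros t z1 z2 Ht. unfold Tm. destruct H1 as [_ D1]. destruct H2 as [_ D2]. split; [|split].
    + apply Cdiff_scale. apply (Cdiff_mul (fun s => phi1 s _) (fun s => phi2 s _)).
      apply (D1 t _ Ht). apply (D2 t _ Ht).
    + apply Cdiff_scale. apply (Cdiff_mul (fun w => phi1 t (Cadd (Cmul al w) (Cmul be z2))) (fun w => phi2 t (Cadd (Cmul ga w) (Cmul de z2)))).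
      apply (Cdiff_affine (phi1 t)); auto. apply (D1 t _ Ht).
      apply (Cdiff_affine (phi2 t)); auto. apply (D2 t _ Ht).
    + apply Cdiff_scale. apply (Cdiff_mul (fun w => phi1 t (Cadd (Cmul al z1) (Cmul be w))) (fun w => phi2 t (Cadd (Cmul ga z1) (Cmul de w)))).
      apply (Cdiff_ext (fun w => phi1 t (Cadd (Cmul be w) (Cmul al z1)))). intro; f_equal; ring.
      apply (Cdiff_affine (phi1 t)); auto. replace (Cadd (Cmul be z2) (Cmul al z1)) with (Cadd (Cmul al z1) (Cmul be z2)) by ring. apply (D1 t _ Ht).
      apply (Cdiff_ext (fun w => phi2 t (Cadd (Cmul de w) (Cmul ga z1)))). intro; f_equal; ring.
      apply (Cdiff_affine (phi2 t)); auto. replace (Cadd (Cmul de z2) (Cmul ga z1)) with (Cadd (Cmul ga z1) (Cmul de z2)) by ring. apply (D2 t _ Ht).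
Qed.

Lemma holo3_add f g : holo3 f -> holo3 g -> holo3 (fun t z1 z2 => Cadd (f t z1 z2) (g t z1 z2)).
Proof.
  intros [Cf Df] [Cg Dg]. split.
  - intros t z1 z2 Ht. exact (cont3_add f g t z1 z2 (Cf t z1 z2 Ht) (Cg t z1 z2 Ht)).
  - intros t z1 z2 Ht. destruct (Df t z1 z2 Ht) as [a1 [a2 a3]]. destruct (Dg t z1 z2 Ht) as [b1 [b2 b3]].
    split; [|split]; apply (Cdiff_add (fun s => f _ _ _) (fun s => g _ _ _)); auto.
Qed.

Lemma holo3_C0 : holo3 (fun _ _ _ => C0).
Proof. split. intros t z1 z2 Ht; apply (cont3_const C0 t z1 z2). intros t z1 z2 Ht; split; [|split]; apply Cdiff_const. Qed.

Lemma neqC0 a b : (a <> 0 \/ b <> 0) -> (a, b) <> C0.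
Proof. intros H E; unfold C0 in E; inversion E; lra. Qed.

Lemma holo3_Hsum phi1 phi2 k : holo2 phi1 -> holo2 phi2 -> holo3 (Hsum phi1 phi2 k).
Proof.
  intros H1 H2. unfold Hsum.
  repeat apply holo3_add; try apply holo3_C0; apply holo3_Tm; auto; apply neqC0; lra.
Qed.

Definition Rsuml {I : Type} (f : I -> R) (l : list I) : R := fold_right (fun x acc => f x + acc) 0 l.

Lemma Csum_app {I} (f : I -> CC) l1 l2 : Csum (map f (l1 ++ l2)) = Cadd (Csum (map f l1)) (Csum (map f l2)).
Proof. induction l1; simpl. ring. rewrite IHl1. ring. Qed.

Lemma Rsuml_app {I} (f : I -> R) l1 l2 : Rsuml f (l1 ++ l2) = Rsuml f l1 + Rsuml f l2.
Proof. induction l1; simpl. ring. rewrite IHl1. ring. Qed.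

Lemma Csum_ext {I} (f g : I -> CC) l : (forall x, In x l -> f x = g x) -> Csum (map f l) = Csum (map g l).
Proof. induction l; simpl; intros; auto. rewrite H, IHl; auto. Qed.

Lemma Rsuml_ext {I} (f g : I -> R) l : (forall x, In x l -> f x = g x) -> Rsuml f l = Rsuml g l.
Proof. induction l; simpl; intros; auto. rewrite H, IHl; auto. Qed.

Lemma Csum_scale {I} (f : I -> CC) k l : Csum (map (fun x => Cmul k (f x)) l) = Cmul k (Csum (map f l)).
Proof. induction l; simpl. ring. rewrite IHl. ring. Qed.

Lemma Csum_scale_r {I} (f : I -> CC) k l : Csum (map (fun x => Cmul (f x) k) l) = Cmul (Csum (map f l)) k.
Proof. induction l; simpl. ring. rewrite IHl. ring. Qed.

Lemma Csum_addf {I} (f g : I -> CC) l : Csum (map (fun x => Cadd (f x) (g x)) l) = Cadd (Csum (map f l)) (Csum (map g l)).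
Proof. induction l; simpl. ring. rewrite IHl. ring. Qed.

Lemma Csum_perm {I} (f : I -> CC) l l' : Permutation l l' -> Csum (map f l) = Csum (map f l').
Proof. induction 1; simpl; auto. rewrite IHPermutation; auto. ring. congruence. Qed.

Lemma Rsuml_perm {I} (f : I -> R) l l' : Permutation l l' -> Rsuml f l = Rsuml f l'.
Proof. induction 1; simpl; auto. rewrite IHPermutation; auto. ring. congruence. Qed.

Lemma Csum_filter {I} (f : I -> CC) (P : I -> bool) l :
  Csum (map f l) = Cadd (Csum (map f (filter P l))) (Csum (map f (filter (fun x => negb (P x)) l))).
Proof. induction l; simpl. ring. destruct (P a); simpl; rewrite IHl; ring. Qed.

Lemma Rsuml_filter {I} (f : I -> R) (P : I -> bool) l :
  Rsuml f l = Rsuml f (filter P l) + Rsuml f (filter (fun x => negb (P x)) l).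
Proof. induction l; simpl. ring. destruct (P a); simpl; rewrite IHl; ring. Qed.

Lemma Rsuml_nonneg {I} (f : I -> R) l : (forall x, 0 <= f x) -> 0 <= Rsuml f l.
Proof. intros H; induction l; simpl. lra. pose proof (H a); lra. Qed.

Lemma Cnorm_Csum {I} (f : I -> CC) l : Cnorm (Csum (map f l)) <= Rsuml (fun x => Cnorm (f x)) l.
Proof. induction l; simpl. rewrite Cnorm_C0; lra. eapply Rle_trans. apply Cnorm_add. lra. Qed.

Lemma Csum_zero {I} (f : I -> CC) l : (forall x, In x l -> f x = C0) -> Csum (map f l) = C0.
Proof. induction l; simpl; intros; auto. rewrite H, IHl; auto. ring. Qed.

Lemma Csum_single {I} (f : I -> CC) l x : NoDup l -> In x l -> (forall y, In y l -> y <> x -> f y = C0) ->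
  Csum (map f l) = f x.
Proof.
  induction l as [|a l IH]; simpl; intros ND Hin H. contradiction.
  inversion ND; subst. destruct Hin as [->|Hin].
  - rewrite Csum_zero. ring. intros y Hy. apply H; auto. intro; subst; contradiction.
  - rewrite H by (auto; intro; subst; contradiction). rewrite IH; auto. ring.
Qed.

Lemma Rsuml_le {I} (f : I -> R) G H : NoDup G -> NoDup H -> incl G H -> (forall x, 0 <= f x) ->
  Rsuml f G <= Rsuml f H.
Proof.
  revert H. induction G as [|x G IH]; simpl; intros H NG NH Hi Hf.
  - apply Rsuml_nonneg; auto.
  - inversion NG; subst.
    assert (Hx : In x H) by (apply Hi; left; auto).
    destruct (in_split _ _ Hx) as [L1 [L2 ->]].
    rewrite (Rsuml_perm f (L1 ++ x :: L2) (x :: L1 ++ L2)) by (symmetry; apply Permutation_middle).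
    simpl. apply Rplus_le_compat_l. apply IH; auto.
    + apply NoDup_remove_1 in NH; auto.
    + intros y Hy. assert (HY : In y (L1 ++ x :: L2)) by (apply Hi; right; auto).
      apply in_app_or in HY. apply in_or_app. destruct HY as [|[|]]; auto. subst; contradiction.
Qed.

Lemma Cre_Csum {I} (f : I -> CC) l : Cre (Csum (map f l)) = Rsuml (fun x => Cre (f x)) l.
Proof. induction l; simpl. reflexivity. rewrite <- IHl. reflexivity. Qed.
Lemma Cim_Csum {I} (f : I -> CC) l : Cim (Csum (map f l)) = Rsuml (fun x => Cim (f x)) l.
Proof. induction l; simpl. reflexivity. rewrite <- IHl. reflexivity. Qed.

Definition posb (x : R) : bool := if Rle_dec 0 x then true else false.

Lemma Rsuml_abs {I} (f : I -> R) l :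
  Rsuml (fun x => Rabs (f x)) l = Rsuml f (filter (fun x => posb (f x)) l) - Rsuml f (filter (fun x => negb (posb (f x))) l).
Proof.
  induction l; simpl. ring. destruct (posb (f a)) eqn:E; simpl; unfold posb in E;
  destruct (Rle_dec 0 (f a)); try discriminate.
  rewrite Rabs_right by lra. rewrite IHl. ring.
  rewrite Rabs_left by lra. rewrite IHl. ring.
Qed.

Lemma has_usum_ext {I} (a b : I -> CC) S : (forall x, a x = b x) -> has_usum a S -> has_usum b S.
Proof. intros E H. assert (a = b) by (apply functional_extensionality; auto). subst; auto. Qed.

Lemma has_usum_zero {I} : has_usum (fun _ : I => C0) C0.
Proof. intros eps He. exists nil. intros F _ _. rewrite Csum_zero by auto. replace (Csub C0 C0) with C0 by ring. rewrite Cnorm_C0; lra. Qed.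

Lemma has_usum_add {I} (a b : I -> CC) S T : has_usum a S -> has_usum b T -> has_usum (fun x => Cadd (a x) (b x)) (Cadd S T).
Proof.
  intros Ha Hb eps He. destruct (Ha (eps/2) ltac:(lra)) as [F1 H1]. destruct (Hb (eps/2) ltac:(lra)) as [F2 H2].
  exists (F1 ++ F2). intros F ND Hi.
  specialize (H1 F ND (fun x h => Hi x (in_or_app _ _ _ (or_introl h)))).
  specialize (H2 F ND (fun x h => Hi x (in_or_app _ _ _ (or_intror h)))).
  rewrite Csum_addf.
  replace (Csub (Cadd (Csum (map a F)) (Csum (map b F))) (Cadd S T)) with
    (Cadd (Csub (Csum (map a F)) S) (Csub (Csum (map b F)) T)) by ring.
  eapply Rle_lt_trans. apply Cnorm_add. lra.
Qed.

Lemma has_usum_scale {I} (a : I -> CC) S k : has_usum a S -> has_usum (fun x => Cmul k (a x)) (Cmul k S).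
Proof.
  intros Ha eps He. destruct (Ha (eps / (Cnorm k + 1))) as [F0 H0].
  apply Rdiv_lt_0_compat; [lra|]. pose proof (Cnorm_nonneg k); lra.
  exists F0. intros F ND Hi. specialize (H0 F ND Hi). rewrite Csum_scale.
  replace (Csub (Cmul k (Csum (map a F))) (Cmul k S)) with (Cmul k (Csub (Csum (map a F)) S)) by ring.
  rewrite Cnorm_mul. pose proof (Cnorm_nonneg k). pose proof (Cnorm_nonneg (Csub (Csum (map a F)) S)).
  assert (HH : Cnorm k * Cnorm (Csub (Csum (map a F)) S) <= Cnorm k * (eps / (Cnorm k + 1))) by (apply Rmult_le_compat_l; lra).
  replace (Cnorm k * (eps / (Cnorm k + 1))) with (eps - eps / (Cnorm k + 1)) in HH by (field; lra).
  pose proof (Rdiv_lt_0_compat eps (Cnorm k + 1) He ltac:(lra)). lra.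
Qed.

Lemma NoDup_flat_map {D E} (fib : E -> list D) (pi : D -> E) G :
  NoDup G -> (forall e, NoDup (fib e)) -> (forall d e, In d (fib e) -> pi d = e) -> NoDup (flat_map fib G).
Proof.
  induction G as [|e G IH]; simpl; intros NG Nf Hp. constructor.
  inversion NG; subst. apply NoDup_app; auto.
  intros d Hd Hd2. apply in_flat_map in Hd2. destruct Hd2 as [e' [He' Hd']].
  apply Hp in Hd. apply Hp in Hd'. subst. congruence.
Qed.

Lemma Csum_flat_map {D E} (a : D -> CC) (fib : E -> list D) G :
  Csum (map a (flat_map fib G)) = Csum (map (fun e => Csum (map a (fib e))) G).
Proof. induction G; simpl. reflexivity. rewrite Csum_app, IHG. reflexivity. Qed.

Lemma has_usum_fiber {D E} (a : D -> CC) S (pi : D -> E) (fib : E -> list D) :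
  (forall e, NoDup (fib e)) -> (forall d e, In d (fib e) <-> pi d = e) ->
  has_usum a S -> has_usum (fun e => Csum (map a (fib e))) S.
Proof.
  intros Nf Hf Ha eps He. destruct (Ha eps He) as [F0 H0].
  exists (map pi F0). intros G ND Hi.
  rewrite <- Csum_flat_map. apply H0.
  - apply NoDup_flat_map with pi; auto. intros d e; apply Hf.
  - intros d Hd. apply in_flat_map. exists (pi d). split. apply Hi. apply in_map; auto. apply Hf; auto.
Qed.

Definition inb {I} (dec : forall x y : I, {x = y} + {x <> y}) (l : list I) (x : I) : bool :=
  if in_dec dec x l then true else false.

Lemma inb_true {I} dec (l : list I) x : inb dec l x = true <-> In x l.
Proof. unfold inb; destruct (in_dec dec x l); split; intros; auto; discriminate || contradiction. Qed.

Lemma inb_false {I} dec (l : list I) x : negb (inb dec l x) = true <-> ~ In x l.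
Proof. unfold inb; destruct (in_dec dec x l); simpl; split; intros; auto; try discriminate; contradiction. Qed.

Lemma Rsuml_mono {I} (f g : I -> R) l : (forall x, f x <= g x) -> Rsuml f l <= Rsuml g l.
Proof. intros H; induction l; simpl. lra. pose proof (H a); lra. Qed.

Lemma Rsuml_plus {I} (f g : I -> R) l : Rsuml (fun x => f x + g x) l = Rsuml f l + Rsuml g l.
Proof. induction l; simpl. ring. rewrite IHl; ring. Qed.

Lemma has_usum_cauchy {I} (dec : forall x y : I, {x = y} + {x <> y}) (a : I -> CC) S eps F0 :
  (forall F, NoDup F -> incl F0 F -> Cnorm (Csub (Csum (map a F)) S) < eps) ->
  forall G, NoDup G -> (forall x, In x G -> ~ In x F0) -> Cnorm (Csum (map a G)) < 2 * eps.
Proof.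
  intros H0 G NG Hd.
  set (F0' := nodup dec F0).
  assert (H1 : Cnorm (Csub (Csum (map a F0')) S) < eps).
  { apply H0. apply NoDup_nodup. intros x Hx; apply nodup_In; auto. }
  assert (H2 : Cnorm (Csub (Csum (map a (F0' ++ G))) S) < eps).
  { apply H0. apply NoDup_app; auto. apply NoDup_nodup. intros x Hx Hx'. apply (Hd x Hx'). apply nodup_In in Hx; auto.
    intros x Hx; apply in_or_app; left; apply nodup_In; auto. }
  rewrite Csum_app in H2.
  replace (Csum (map a G)) with (Csub (Csub (Cadd (Csum (map a F0')) (Csum (map a G))) S) (Csub (Csum (map a F0')) S)) by ring.
  eapply Rle_lt_trans. apply Cnorm_triangle with (b := C0).
  replace (Csub (Csub (Cadd (Csum (map a F0')) (Csum (map a G))) S) C0) with (Csub (Cadd (Csum (map a F0')) (Csum (map a G))) S) by ring.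
  replace (Csub C0 (Csub (Csum (map a F0')) S)) with (Copp (Csub (Csum (map a F0')) S)) by ring.
  rewrite Cnorm_opp. lra.
Qed.

Lemma four_bound x1 x2 x3 x4 n1 n2 n3 n4 e :
  Rabs x1 <= n1 -> Rabs x2 <= n2 -> Rabs x3 <= n3 -> Rabs x4 <= n4 ->
  n1 < 2 * (e/8) -> n2 < 2 * (e/8) -> n3 < 2 * (e/8) -> n4 < 2 * (e/8) -> x1 - x2 + (x3 - x4) < e.
Proof.
  intros. pose proof (Rle_abs x1); pose proof (Rle_abs (-x2)); rewrite Rabs_Ropp in *; pose proof (Rle_abs x3); pose proof (Rle_abs (-x4)); rewrite Rabs_Ropp in *. lra.
Qed.

Lemma has_usum_tail {I} (dec : forall x y : I, {x = y} + {x <> y}) (a : I -> CC) S :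
  has_usum a S -> forall eps, 0 < eps -> exists F0, forall G, NoDup G -> (forall x, In x G -> ~ In x F0) ->
    Rsuml (fun x => Cnorm (a x)) G < eps.
Proof.
  intros Ha eps He. destruct (Ha (eps/8) ltac:(lra)) as [F0 H0]. exists F0. intros G NG Hd.
  pose proof (has_usum_cauchy dec a S (eps/8) F0 H0) as HC.
  assert (Hsub : forall P : I -> bool, Cnorm (Csum (map a (filter P G))) < 2 * (eps/8)).
  { intro P. apply HC. apply NoDup_filter; auto. intros x Hx. apply filter_In in Hx. apply Hd; tauto. }
  eapply Rle_lt_trans. apply Rsuml_mono with (g := fun x => Rabs (Cre (a x)) + Rabs (Cim (a x))). intro; apply Cnorm_le_reim.
  rewrite Rsuml_plus. rewrite !(Rsuml_abs (fun x => _)).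
  rewrite <- !(Cre_Csum a), <- !(Cim_Csum a).
  pose proof (Hsub (fun x => posb (Cre (a x)))). pose proof (Hsub (fun x => negb (posb (Cre (a x))))).
  pose proof (Hsub (fun x => posb (Cim (a x)))). pose proof (Hsub (fun x => negb (posb (Cim (a x))))).
  pose proof (Cnorm_re (Csum (map a (filter (fun x => posb (Cre (a x))) G)))).
  pose proof (Cnorm_re (Csum (map a (filter (fun x => negb (posb (Cre (a x)))) G)))).
  pose proof (Cnorm_im (Csum (map a (filter (fun x => posb (Cim (a x))) G)))).
  pose proof (Cnorm_im (Csum (map a (filter (fun x => negb (posb (Cim (a x)))) G)))).
  eapply four_bound; eassumption.
Qed.

Lemma has_usum_bound {I} (dec : forall x y : I, {x = y} + {x <> y}) (a : I -> CC) S :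
  has_usum a S -> exists M, 0 <= M /\ forall G, NoDup G -> Rsuml (fun x => Cnorm (a x)) G <= M.
Proof.
  intros Ha. destruct (has_usum_tail dec a S Ha 1 ltac:(lra)) as [F0 H0].
  exists (Rsuml (fun x => Cnorm (a x)) (nodup dec F0) + 1). split.
  pose proof (Rsuml_nonneg (fun x => Cnorm (a x)) (nodup dec F0) (fun x => Cnorm_nonneg _)); lra.
  intros G NG. rewrite (Rsuml_filter _ (inb dec F0) G).
  assert (Rsuml (fun x => Cnorm (a x)) (filter (inb dec F0) G) <= Rsuml (fun x => Cnorm (a x)) (nodup dec F0)).
  { apply Rsuml_le. apply NoDup_filter; auto. apply NoDup_nodup.
    intros x Hx. apply filter_In in Hx. apply nodup_In. apply (inb_true dec). tauto. intro; apply Cnorm_nonneg. }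
  assert (Rsuml (fun x => Cnorm (a x)) (filter (fun x => negb (inb dec F0 x)) G) < 1).
  { apply H0. apply NoDup_filter; auto. intros x Hx. apply filter_In in Hx. apply (inb_false dec). tauto. }
  lra.
Qed.

Lemma NoDup_list_prod {A B} (l1 : list A) (l2 : list B) : NoDup l1 -> NoDup l2 -> NoDup (list_prod l1 l2).
Proof.
  induction l1 as [|x l1 IH]; simpl; intros N1 N2. constructor.
  inversion N1; subst. apply NoDup_app; auto.
  - apply FinFun.Injective_map_NoDup; auto. intros y y' E; inversion E; auto.
  - intros p Hp Hp'. apply in_map_iff in Hp. destruct Hp as [y [<- _]]. apply in_prod_iff in Hp'. tauto.
Qed.

Lemma Csum_list_prod {A B} (f : A -> CC) (g : B -> CC) l1 l2 :
  Csum (map (fun p => Cmul (f (fst p)) (g (snd p))) (list_prod l1 l2)) = Cmul (Csum (map f l1)) (Csum (map g l2)).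
Proof.
  induction l1; simpl. ring. rewrite Csum_app, IHl1, map_map. simpl. rewrite Csum_scale. ring.
Qed.

Lemma Rsuml_list_prod {A B} (f : A -> R) (g : B -> R) l1 l2 :
  Rsuml (fun p => f (fst p) * g (snd p)) (list_prod l1 l2) = Rsuml f l1 * Rsuml g l2.
Proof.
  induction l1; simpl. ring. rewrite Rsuml_app, IHl1.
  assert (Rsuml (fun p => f (fst p) * g (snd p)) (map (fun y => (a, y)) l2) = f a * Rsuml g l2).
  { clear IHl1. induction l2; simpl. ring. rewrite IHl2. ring. }
  rewrite H. ring.
Qed.

Lemma prod_part {I J} (decI : forall x y : I, {x = y} + {x <> y}) (decJ : forall x y : J, {x = y} + {x <> y})
  (f : I -> R) (g : J -> R) (R : list (I * J)) :
  NoDup R -> (forall x, 0 <= f x) -> (forall y, 0 <= g y) ->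
  Rsuml (fun p => f (fst p) * g (snd p)) R <=
  Rsuml f (nodup decI (map fst R)) * Rsuml g (nodup decJ (map snd R)).
Proof.
  intros NR Hf Hg. rewrite <- Rsuml_list_prod.
  apply Rsuml_le; auto. apply NoDup_list_prod; apply NoDup_nodup.
  intros [x y] Hp. apply in_prod_iff. split; apply nodup_In; apply in_map_iff; exists (x, y); auto.
  intros [x y]; simpl. apply Rmult_le_pos; auto.
Qed.

Definition prod_dec {I J} (decI : forall x y : I, {x = y} + {x <> y}) (decJ : forall x y : J, {x = y} + {x <> y}) :
  forall p q : I * J, {p = q} + {p <> q}.
Proof. intros [a b] [c d]. destruct (decI a c); destruct (decJ b d); subst; auto; right; intro E; inversion E; auto. Defined.

Lemma small_mul_le a b d M : 0 <= a -> a < d -> 0 <= b -> b <= M -> a * b <= d * M.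
Proof. intros. apply Rmult_le_compat; lra. Qed.

Lemma has_usum_prod {I J} (decI : forall x y : I, {x = y} + {x <> y}) (decJ : forall x y : J, {x = y} + {x <> y})
  (a : I -> CC) (b : J -> CC) SA SB :
  has_usum a SA -> has_usum b SB -> has_usum (fun p : I * J => Cmul (a (fst p)) (b (snd p))) (Cmul SA SB).
Proof.
  intros Ha Hb eps He.
  destruct (has_usum_bound decI a SA Ha) as [MA [HMA BA]].
  destruct (has_usum_bound decJ b SB Hb) as [MB [HMB BB]].
  set (K := Cnorm SA + Cnorm SB + 1).
  assert (HK : 1 <= K) by (unfold K; pose proof (Cnorm_nonneg SA); pose proof (Cnorm_nonneg SB); lra).
  set (eta := Rmin 1 (eps / (4 * K))).
  assert (Heta : 0 < eta) by (apply Rmin_pos; [lra|apply Rdiv_lt_0_compat; lra]).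
  set (dl := eps / (4 * (MA + MB + 1))).
  assert (Hdl : 0 < dl) by (apply Rdiv_lt_0_compat; lra).
  destruct (Ha eta Heta) as [A1 HA1]. destruct (has_usum_tail decI a SA Ha dl Hdl) as [A2 HA2].
  destruct (Hb eta Heta) as [B1 HB1]. destruct (has_usum_tail decJ b SB Hb dl Hdl) as [B2 HB2].
  set (A0 := nodup decI (A1 ++ A2)). set (B0 := nodup decJ (B1 ++ B2)).
  exists (list_prod A0 B0). intros F NF Hi.
  set (dIJ := prod_dec decI decJ).
  rewrite (Csum_filter _ (inb dIJ (list_prod A0 B0)) F).
  assert (Hperm : Permutation (filter (inb dIJ (list_prod A0 B0)) F) (list_prod A0 B0)).
  { apply NoDup_Permutation. apply NoDup_filter; auto. apply NoDup_list_prod; apply NoDup_nodup.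
    intro p. rewrite filter_In, inb_true. split. tauto. intro; split; auto. }
  rewrite (Csum_perm _ _ _ Hperm), Csum_list_prod.
  set (X := Csum (map a A0)). set (Y := Csum (map b B0)).
  set (Rl := filter (fun x => negb (inb dIJ (list_prod A0 B0) x)) F).
  assert (HX : Cnorm (Csub X SA) < eta).
  { apply HA1. apply NoDup_nodup. intros x Hx. apply nodup_In. apply in_or_app; auto. }
  assert (HY : Cnorm (Csub Y SB) < eta).
  { apply HB1. apply NoDup_nodup. intros x Hx. apply nodup_In. apply in_or_app; auto. }
  assert (NR : NoDup Rl) by (apply NoDup_filter; auto).
  assert (HRl : forall p, In p Rl -> ~ (In (fst p) A0 /\ In (snd p) B0)).
  { intros [x y] Hp Hc. unfold Rl in Hp. apply filter_In in Hp. destruct Hp as [_ Hp].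
    apply (inb_false dIJ) in Hp. apply Hp. apply in_prod_iff; auto. }
  set (g := fun p : I * J => Cnorm (a (fst p)) * Cnorm (b (snd p))).
  assert (HR : Cnorm (Csum (map (fun p : I * J => Cmul (a (fst p)) (b (snd p))) Rl)) <= Rsuml g Rl).
  { eapply Rle_trans. apply Cnorm_Csum. apply Rsuml_mono. intro; unfold g; rewrite Cnorm_mul; lra. }
  rewrite (Rsuml_filter g (fun p => inb decI A0 (fst p)) Rl) in HR.
  set (R2 := filter (fun p => inb decI A0 (fst p)) Rl) in *.
  set (R1 := filter (fun p => negb (inb decI A0 (fst p))) Rl) in *.
  assert (NR1 : NoDup R1) by (apply NoDup_filter; auto).
  assert (NR2 : NoDup R2) by (apply NoDup_filter; auto).
  assert (H1 : Rsuml g R1 <= dl * MB).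
  { eapply Rle_trans. apply (prod_part decI decJ (fun x => Cnorm (a x)) (fun y => Cnorm (b y))); auto; intro; apply Cnorm_nonneg.
    apply small_mul_le. apply Rsuml_nonneg; intro; apply Cnorm_nonneg.
    apply HA2. apply NoDup_nodup. intros x Hx Hx2. apply nodup_In in Hx. apply in_map_iff in Hx.
    destruct Hx as [p [<- Hp]]. unfold R1 in Hp. apply filter_In in Hp. destruct Hp as [_ Hp].
    apply (inb_false decI) in Hp. apply Hp. apply nodup_In. apply in_or_app; auto.
    apply Rsuml_nonneg; intro; apply Cnorm_nonneg. apply BB. apply NoDup_nodup. }
  assert (H2 : Rsuml g R2 <= MA * dl).
  { eapply Rle_trans. apply (prod_part decI decJ (fun x => Cnorm (a x)) (fun y => Cnorm (b y))); auto; intro; apply Cnorm_nonneg.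
    rewrite Rmult_comm, (Rmult_comm MA).
    apply small_mul_le. apply Rsuml_nonneg; intro; apply Cnorm_nonneg.
    apply HB2. apply NoDup_nodup. intros y Hy Hy2. apply nodup_In in Hy. apply in_map_iff in Hy.
    destruct Hy as [p [<- Hp]]. unfold R2 in Hp. apply filter_In in Hp. destruct Hp as [Hp Hq].
    apply (inb_true decI) in Hq. apply (HRl p Hp). split; auto. apply nodup_In. apply in_or_app; auto.
    apply Rsuml_nonneg; intro; apply Cnorm_nonneg. apply BA. apply NoDup_nodup. }
  assert (HXY : Cnorm (Csub (Cmul X Y) (Cmul SA SB)) < eps / 4).
  { eapply Rle_lt_trans. apply prod_bound.
    pose proof (Cnorm_nonneg (Csub X SA)) as N1. pose proof (Cnorm_nonneg (Csub Y SB)) as N2.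
    pose proof (Cnorm_nonneg SA) as N3. pose proof (Cnorm_nonneg SB) as N4.
    assert (E1 : eta <= 1) by apply Rmin_l. assert (E2 : eta <= eps / (4 * K)) by apply Rmin_r.
    assert (Q1 : Cnorm (Csub X SA) * (Cnorm SB + Cnorm (Csub Y SB)) < eta * (Cnorm SB + 1)).
    { apply Rle_lt_trans with (Cnorm (Csub X SA) * (Cnorm SB + 1)). apply Rmult_le_compat_l; lra.
      apply Rmult_lt_compat_r; lra. }
    assert (Q2 : Cnorm SA * Cnorm (Csub Y SB) <= Cnorm SA * eta) by (apply Rmult_le_compat_l; lra).
    assert (Q3 : eta * K <= eps / (4 * K) * K) by (apply Rmult_le_compat_r; lra).
    replace (eps / (4 * K) * K) with (eps / 4) in Q3 by (field; lra).
    assert (Q4 : eta * (Cnorm SB + 1) + Cnorm SA * eta = eta * K) by (unfold K; ring).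
    lra. }
  assert (Hd4 : dl * (MA + MB) <= eps / 4).
  { unfold dl. apply Rle_trans with (eps / (4 * (MA + MB + 1)) * (MA + MB + 1)).
    apply Rmult_le_compat_l; [left; apply Rdiv_lt_0_compat; lra|lra]. right; field; lra. }
  replace (Csub (Cadd (Cmul X Y) (Csum (map (fun p : I * J => Cmul (a (fst p)) (b (snd p))) Rl))) (Cmul SA SB))
    with (Cadd (Csub (Cmul X Y) (Cmul SA SB)) (Csum (map (fun p : I * J => Cmul (a (fst p)) (b (snd p))) Rl))) by ring.
  eapply Rle_lt_trans. apply Cnorm_add. lra.
Qed.

Definition decNZ : forall x y : nat * Z, {x = y} + {x <> y}.
Proof. decide equality; [apply Z.eq_dec | apply Nat.eq_dec]. Defined.

Definition sumterm (c1 c2 : nat -> Z -> CC) (n : nat) (r1 r2 : Z) : CC :=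
  Csum (map (fun n1 => Cmul (c1 n1 r1) (c2 (n - n1)%nat r2)) (seq 0 (S n))).

Lemma Cnat_add a b : Cnat (a + b) = Cadd (Cnat a) (Cnat b).
Proof. unfold Cnat, RtoC, Cadd, Cre, Cim; simpl. rewrite plus_INR. apply CC_eq; ring. Qed.

Lemma Tm_fourier phi1 phi2 c1 c2 c al be ga de (pi sg : Z * Z -> Z * Z) :
  fourier_cl phi1 c1 -> fourier_cl phi2 c2 ->
  (forall r, sg (pi r) = r) -> (forall ab, pi (sg ab) = ab) ->
  (forall r1 r2 z1 z2, Cadd (Cmul (CZ r1) (Cadd (Cmul al z1) (Cmul be z2))) (Cmul (CZ r2) (Cadd (Cmul ga z1) (Cmul de z2)))
     = Cadd (Cmul (sharp_elt (pi (r1, r2))) z1) (Cmul (Cconj (sharp_elt (pi (r1, r2)))) z2)) ->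
  fourier_h (Tm phi1 phi2 c al be ga de) (fun n ab => Cmul c (sumterm c1 c2 n (fst (sg ab)) (snd (sg ab)))).
Proof.
  intros F1 F2 Hsp Hps HE t z1 z2 Ht.
  set (w1 := Cadd (Cmul al z1) (Cmul be z2)). set (w2 := Cadd (Cmul ga z1) (Cmul de z2)).
  pose proof (has_usum_prod decNZ decNZ _ _ _ _ (F1 t w1 Ht) (F2 t w2 Ht)) as SP.
  set (PI := fun q : (nat * Z) * (nat * Z) => ((fst (fst q) + fst (snd q))%nat, pi (snd (fst q), snd (snd q)))).
  set (fib := fun e : nat * (Z * Z) => map (fun n1 => ((n1, fst (sg (snd e))), ((fst e - n1)%nat, snd (sg (snd e))))) (seq 0 (S (fst e)))).
  assert (Nf : forall e, NoDup (fib e)).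
  { intro e. unfold fib. apply FinFun.Injective_map_NoDup. intros x y E; inversion E; auto. apply seq_NoDup. }
  assert (Hf : forall d e, In d (fib e) <-> PI d = e).
  { intros [[n1 r1] [n2 r2]] [n ab]. unfold fib, PI; cbn [fst snd]. split.
    - intro H. apply in_map_iff in H. destruct H as [k [E Hk]]. apply in_seq in Hk. inversion E; subst.
      f_equal. lia. rewrite <- surjective_pairing. apply Hps.
    - intro H. inversion H; subst. apply in_map_iff. exists n1. split.
      rewrite Hsp. simpl. f_equal. f_equal. lia. apply in_seq. lia. }
  pose proof (has_usum_fiber _ _ PI fib Nf Hf SP) as SF.
  apply (has_usum_scale _ _ c) in SF.
  eapply has_usum_ext; [|exact SF].
  intros [n ab]. unfold fib. cbn [fst snd]. rewrite map_map. cbn [fst snd].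
  unfold sumterm.
  replace (Cmul (Cmul c (Csum (map (fun n1 : nat => Cmul (c1 n1 (fst (sg ab))) (c2 (n - n1)%nat (snd (sg ab)))) (seq 0 (S n))))) (ee (Cadd (Cadd (Cmul (Cnat n) t) (Cmul (sharp_elt ab) z1)) (Cmul (Cconj (sharp_elt ab)) z2))))
    with (Cmul c (Cmul (Csum (map (fun n1 : nat => Cmul (c1 n1 (fst (sg ab))) (c2 (n - n1)%nat (snd (sg ab)))) (seq 0 (S n)))) (ee (Cadd (Cadd (Cmul (Cnat n) t) (Cmul (sharp_elt ab) z1)) (Cmul (Cconj (sharp_elt ab)) z2))))) by ring.
  rewrite <- Csum_scale_r. f_equal. apply Csum_ext. intros n1 Hn1. apply in_seq in Hn1.
  set (r1 := fst (sg ab)). set (r2 := snd (sg ab)).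
  assert (Eab : ab = pi (r1, r2)) by (unfold r1, r2; rewrite <- surjective_pairing; symmetry; apply Hps).
  rewrite Eab. replace (Cnat n) with (Cadd (Cnat n1) (Cnat (n - n1))) by (rewrite <- Cnat_add; f_equal; lia).
  assert (EX : Cadd (Cadd (Cmul (Cadd (Cnat n1) (Cnat (n - n1))) t) (Cmul (sharp_elt (pi (r1, r2))) z1)) (Cmul (Cconj (sharp_elt (pi (r1, r2)))) z2) = Cadd (Cadd (Cmul (Cnat n1) t) (Cmul (CZ r1) w1)) (Cadd (Cmul (Cnat (n - n1)) t) (Cmul (CZ r2) w2))).
  { pose proof (HE r1 r2 z1 z2) as H. fold w1 w2 in H.
    transitivity (Cadd (Cadd (Cmul (Cnat n1) t) (Cmul (Cnat (n - n1)%nat) t)) (Cadd (Cmul (sharp_elt (pi (r1, r2))) z1) (Cmul (Cconj (sharp_elt (pi (r1, r2)))) z2))). ring.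
    rewrite <- H. ring. }
  rewrite EX.
  rewrite (ee_add (Cadd (Cmul (Cnat n1) t) (Cmul (CZ r1) w1))). ring.
Qed.

Definition fadd (f g : CC -> CC -> CC -> CC) : CC -> CC -> CC -> CC := fun t z1 z2 => Cadd (f t z1 z2) (g t z1 z2).
Definition cadd (f g : nat -> Z * Z -> CC) : nat -> Z * Z -> CC := fun n ab => Cadd (f n ab) (g n ab).

Lemma fourier_h_add f g cf cg : fourier_h f cf -> fourier_h g cg -> fourier_h (fadd f g) (cadd cf cg).
Proof.
  intros Hf Hg t z1 z2 Ht. unfold fadd. eapply has_usum_ext; [|apply (has_usum_add _ _ _ _ (Hf t z1 z2 Ht) (Hg t z1 z2 Ht))].
  intros [n ab]; cbv beta zeta; unfold cadd; ring.
Qed.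

Lemma fourier_h_C0 : fourier_h (fun _ _ _ => C0) (fun _ _ => C0).
Proof. intros t z1 z2 Ht. eapply has_usum_ext; [|apply has_usum_zero]. intros [n ab]; cbv beta zeta; ring. Qed.

Definition sg1 (ab : Z * Z) : Z * Z := (- snd ab, fst ab)%Z.
Definition pi1 (r : Z * Z) : Z * Z := (snd r, - fst r)%Z.
Definition sg2 (ab : Z * Z) : Z * Z := (snd ab, - fst ab)%Z.
Definition pi2 (r : Z * Z) : Z * Z := (- snd r, fst r)%Z.
Definition sg3 (ab : Z * Z) : Z * Z := ab.
Definition sg4 (ab : Z * Z) : Z * Z := (- fst ab, - snd ab)%Z.

Definition Hcoef (c1 c2 : nat -> Z -> CC) (k : nat) : nat -> Z * Z -> CC :=
  cadd (fun n ab => Cmul (Cinv (Cpow C1 k)) (sumterm c1 c2 n (fst (sg1 ab)) (snd (sg1 ab))))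
 (cadd (fun n ab => Cmul (Cinv (Cpow (Copp C1) k)) (sumterm c1 c2 n (fst (sg2 ab)) (snd (sg2 ab))))
 (cadd (fun n ab => Cmul (Cinv (Cpow Ci k)) (sumterm c1 c2 n (fst (sg3 ab)) (snd (sg3 ab))))
 (cadd (fun n ab => Cmul (Cinv (Cpow (Copp Ci) k)) (sumterm c1 c2 n (fst (sg4 ab)) (snd (sg4 ab))))
       (fun _ _ => C0)))).

Lemma Hsum_fadd phi1 phi2 k : Hsum phi1 phi2 k =
  fadd (Tm phi1 phi2 (Cinv (Cpow C1 k)) (1/2, 0) (1/2, 0) (0, 1/2) (0, -(1/2)))
  (fadd (Tm phi1 phi2 (Cinv (Cpow (Copp C1) k)) (-(1/2), 0) (-(1/2), 0) (0, -(1/2)) (0, 1/2))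
  (fadd (Tm phi1 phi2 (Cinv (Cpow Ci k)) (0, 1/2) (0, -(1/2)) (-(1/2), 0) (-(1/2), 0))
  (fadd (Tm phi1 phi2 (Cinv (Cpow (Copp Ci) k)) (0, -(1/2)) (0, 1/2) (1/2, 0) (1/2, 0)) (fun _ _ _ => C0)))).
Proof. reflexivity. Qed.

Ltac sheq := intros; unfold sharp_elt, pi1, pi2, sg1, sg2, sg3, sg4; cdes; cbn [fst snd];
  repeat rewrite ?CZ_mul, ?CZ_opp; cunf; apply CC_eq; repeat rewrite ?opp_IZR; field.

Lemma Hsum_fourier phi1 phi2 c1 c2 k : fourier_cl phi1 c1 -> fourier_cl phi2 c2 ->
  fourier_h (Hsum phi1 phi2 k) (Hcoef c1 c2 k).
Proof.
  intros F1 F2. rewrite Hsum_fadd. unfold Hcoef.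
  apply fourier_h_add. apply (Tm_fourier phi1 phi2 c1 c2 _ _ _ _ _ pi1 sg1 F1 F2).
  intros [? ?]; unfold sg1, pi1; simpl; f_equal; lia. intros [? ?]; unfold sg1, pi1; simpl; f_equal; lia. sheq.
  apply fourier_h_add. apply (Tm_fourier phi1 phi2 c1 c2 _ _ _ _ _ pi2 sg2 F1 F2).
  intros [? ?]; unfold sg2, pi2; simpl; f_equal; lia. intros [? ?]; unfold sg2, pi2; simpl; f_equal; lia. sheq.
  apply fourier_h_add. apply (Tm_fourier phi1 phi2 c1 c2 _ _ _ _ _ sg3 sg3 F1 F2).
  intros [? ?]; reflexivity. intros [? ?]; reflexivity. sheq.
  apply fourier_h_add. apply (Tm_fourier phi1 phi2 c1 c2 _ _ _ _ _ sg4 sg4 F1 F2).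
  intros [? ?]; unfold sg4; simpl; f_equal; lia. intros [? ?]; unfold sg4; simpl; f_equal; lia. sheq.
  apply fourier_h_C0.
Qed.

Lemma sumterm_zero (c1 c2 : nat -> Z -> CC) (m : nat) n r1 r2 :
  (forall n r, ~ (IZR r * IZR r <= 4 * INR n * INR m) -> c1 n r = C0) ->
  (forall n r, ~ (IZR r * IZR r <= 4 * INR n * INR m) -> c2 n r = C0) ->
  ~ (IZR r1 * IZR r1 + IZR r2 * IZR r2 <= 4 * INR n * INR m) -> sumterm c1 c2 n r1 r2 = C0.
Proof.
  intros S1 S2 H. unfold sumterm. apply Csum_zero. intros n1 Hn1. apply in_seq in Hn1.
  destruct (Rle_dec (IZR r1 * IZR r1) (4 * INR n1 * INR m)).
  - rewrite (S2 (n - n1)%nat r2). ring. rewrite minus_INR by lia. lra.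
  - rewrite (S1 n1 r1 n0). ring.
Qed.

Lemma sumterm_cusp (c1 c2 : nat -> Z -> CC) (m : nat) n r1 r2 :
  (forall n r, ~ (IZR r * IZR r <= 4 * INR n * INR m) -> c1 n r = C0) ->
  (forall n r, ~ (IZR r * IZR r <= 4 * INR n * INR m) -> c2 n r = C0) ->
  (forall n r, IZR r * IZR r = 4 * INR n * INR m -> c1 n r = C0) ->
  (forall n r, IZR r * IZR r = 4 * INR n * INR m -> c2 n r = C0) ->
  IZR r1 * IZR r1 + IZR r2 * IZR r2 = 4 * INR n * INR m -> sumterm c1 c2 n r1 r2 = C0.
Proof.
  intros S1 S2 K1 K2 H. unfold sumterm. apply Csum_zero. intros n1 Hn1. apply in_seq in Hn1.
  assert (E : INR (n - n1) = INR n - INR n1) by (apply minus_INR; lia).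
  destruct (Rtotal_order (IZR r1 * IZR r1) (4 * INR n1 * INR m)) as [Hl|[He|Hg]].
  - rewrite (S2 (n - n1)%nat r2). ring. rewrite E. lra.
  - rewrite (K1 n1 r1 He). ring.
  - rewrite (S1 n1 r1). ring. lra.
Qed.

Lemma Nrm_sharp ab : Nrm (sharp_elt ab) = (IZR (fst ab) * IZR (fst ab) + IZR (snd ab) * IZR (snd ab)) / 4.
Proof. destruct ab; unfold sharp_elt; cunf; field. Qed.

Lemma ee_real x : ee (RtoC x) = (cos (2*PI*x), sin (2*PI*x)).
Proof. unfold RtoC; rewrite ee_form. replace (-(2*PI*0)) with 0 by ring. rewrite exp_0. apply CC_eq; ring. Qed.

Lemma ee_int k : ee (RtoC (IZR k)) = C1.
Proof.
  rewrite ee_real. unfold C1. assert (Hs : sin (IZR k * PI) = 0) by (apply sin_eq_0_1; exists k; auto).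
  replace (2 * PI * IZR k) with (2 * (IZR k * PI)) by ring.
  rewrite cos_2a_sin, sin_2a, Hs. apply CC_eq; ring.
Qed.

Lemma ee_real_one x : ee (RtoC x) = C1 -> exists k, x = IZR k.
Proof.
  rewrite ee_real. unfold C1. intro E. inversion E as [[E1 E2]].
  replace (2 * PI * x) with (2 * (x * PI)) in E1 by ring. rewrite cos_2a_sin in E1.
  assert (sin (x * PI) = 0) by nra. apply sin_eq_0_0 in H. destruct H as [k Hk].
  exists k. pose proof PI_RGT_0. apply Rmult_eq_reg_r with PI; lra.
Qed.

Lemma ee_pow x j : ee (RtoC (x * INR j)) = Cpow (ee (RtoC x)) j.
Proof.
  induction j. simpl. replace (RtoC (x * 0)) with C0 by (unfold RtoC, C0; f_equal; ring). apply ee_0.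
  rewrite S_INR. replace (RtoC (x * (INR j + 1))) with (Cadd (RtoC (x * INR j)) (RtoC x)) by (cunf; apply CC_eq; ring).
  rewrite ee_add, IHj. simpl. ring.
Qed.

Lemma geom w N : Cmul (Csub w C1) (Csum (map (fun j => Cpow w j) (seq 0 N))) = Csub (Cpow w N) C1.
Proof. induction N. simpl. ring. rewrite seq_S, Csum_app.
  set (A := Csum (map (fun j : nat => Cpow w j) (seq 0 N))) in *. simpl.
  transitivity (Cadd (Cmul (Csub w C1) A) (Cmul (Csub w C1) (Cpow w N))). ring. rewrite IHN. ring. Qed.

Lemma Csum_ones {I} (l : list I) : Csum (map (fun _ => C1) l) = Cnat (length l).
Proof. induction l; simpl. reflexivity. rewrite IHl. unfold Cnat. destruct (length l); simpl; cunf; apply CC_eq; ring. Qed.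

Lemma Cmul_eq0 x y : x <> C0 -> Cmul x y = C0 -> y = C0.
Proof. intros Hx E. replace y with (Cmul (Cmul (Cinv x) x) y) by (rewrite Cinv_l; auto; ring).
  replace (Cmul (Cmul (Cinv x) x) y) with (Cmul (Cinv x) (Cmul x y)) by ring. rewrite E. ring. Qed.

Definition rsum (N : nat) (k : Z) : CC := Csum (map (fun j => ee (RtoC (IZR k * INR j / INR N))) (seq 0 N)).

Lemma rsum_pow N k : rsum N k = Csum (map (fun j => Cpow (ee (RtoC (IZR k / INR N))) j) (seq 0 N)).
Proof. unfold rsum. apply Csum_ext. intros j _. rewrite <- ee_pow. f_equal. f_equal. unfold Rdiv; ring. Qed.

Lemma rsum_div N k : (0 < N)%nat -> (k mod Z.of_nat N = 0)%Z -> rsum N k = Cnat N.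
Proof.
  intros HN Hm. apply Z.mod_divide in Hm; [|lia]. destruct Hm as [q Hq].
  rewrite rsum_pow. replace (IZR k / INR N) with (IZR q).
  rewrite ee_int. rewrite (Csum_ext _ (fun _ => C1)). rewrite Csum_ones, length_seq. reflexivity.
  intros j _. clear. induction j; simpl; auto. rewrite IHj. ring.
  subst. rewrite mult_IZR, <- INR_IZR_INZ. field. apply not_0_INR; lia.
Qed.

Lemma rsum_ndiv N k : (0 < N)%nat -> (k mod Z.of_nat N <> 0)%Z -> rsum N k = C0.
Proof.
  intros HN Hm. rewrite rsum_pow. set (w := ee (RtoC (IZR k / INR N))).
  assert (Hw : w <> C1).
  { intro E. apply ee_real_one in E. destruct E as [q Hq]. apply Hm.
    assert (IZR k = IZR (q * Z.of_nat N)). { rewrite mult_IZR, <- INR_IZR_INZ, <- Hq. field. apply not_0_INR; lia. }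
    apply eq_IZR in H. rewrite H. apply Z.mod_mul. lia. }
  assert (HwN : Cpow w N = C1).
  { unfold w. rewrite <- ee_pow. replace (IZR k / INR N * INR N) with (IZR k) by (field; apply not_0_INR; lia). apply ee_int. }
  apply (Cmul_eq0 (Csub w C1)). intro E. apply Hw. replace w with (Cadd (Csub w C1) C1) by ring. rewrite E. ring.
  rewrite geom, HwN. ring.
Qed.

Lemma sep_aux (R a b : Z) : (0 < R -> Z.abs a < R -> a + R * b = 0 -> a = 0 /\ b = 0)%Z.
Proof. intros. destruct (Z.eq_dec b 0). subst; lia. assert (b >= 1 \/ b <= -1)%Z by lia. destruct H2; nia. Qed.

Lemma sep (M dn da db : Z) : (0 <= M -> Z.abs dn <= 2*M -> Z.abs da <= 2*M -> Z.abs db <= 2*M ->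
  (dn + (4*M+1)*da + (4*M+1)*(4*M+1)*db) mod ((4*M+1)*(4*M+1)*(4*M+1)) = 0 -> dn = 0 /\ da = 0 /\ db = 0)%Z.
Proof.
  intros HM Hn Ha Hb Hm. set (R := (4*M+1)%Z) in *. assert (HR : (0 < R)%Z) by lia.
  apply Z.mod_divide in Hm; [|nia]. destruct Hm as [q Hq].
  assert (Hq0 : q = 0%Z).
  { assert (Z.abs (dn + R * da + R * R * db) < R*R*R)%Z.
    { assert (Z.abs (R*da) <= R * (2*M))%Z by (rewrite Z.abs_mul; nia).
      assert (Z.abs (R*R*db) <= R*R*(2*M))%Z by (rewrite Z.abs_mul, Z.abs_mul; nia).
      assert (Z.abs (dn + R * da + R * R * db) <= Z.abs dn + Z.abs (R*da) + Z.abs (R*R*db))%Z by lia.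
      nia. }
    destruct (Z.eq_dec q 0); auto. assert (q >= 1 \/ q <= -1)%Z by lia. rewrite Hq in H. destruct H0; nia. }
  subst q. simpl in Hq.
  assert (E : (dn + R * (da + R * db) = 0)%Z) by lia.
  destruct (sep_aux R dn (da + R*db) HR ltac:(lia) E) as [H1 H2].
  destruct (sep_aux R da db HR ltac:(lia) H2) as [H3 H4]. auto.
Qed.

Definition decNZZ : forall x y : nat * (Z * Z), {x = y} + {x <> y}.
Proof. decide equality. decide equality; apply Z.eq_dec. apply Nat.eq_dec. Defined.

Definition pmax (p : nat * (Z * Z)) : Z := Z.max (Z.of_nat (fst p)) (Z.max (Z.abs (fst (snd p))) (Z.abs (snd (snd p)))).
Definition lmax (l : list (nat * (Z * Z))) : Z := fold_right (fun p acc => Z.max (pmax p) acc) 0%Z l.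

Lemma lmax_ge l p : In p l -> (pmax p <= lmax l)%Z.
Proof. induction l; simpl; intros H. contradiction. destruct H as [->|H]. lia. specialize (IHl H). lia. Qed.
Lemma lmax_nonneg l : (0 <= lmax l)%Z.
Proof. induction l; simpl; lia. Qed.

Lemma has_usum_sub {I} (a b : I -> CC) S : has_usum a S -> has_usum b S -> has_usum (fun x => Csub (a x) (b x)) C0.
Proof.
  intros Ha Hb. pose proof (has_usum_add _ _ _ _ Ha (has_usum_scale _ _ (Copp C1) Hb)) as H.
  replace (Cadd S (Cmul (Copp C1) S)) with C0 in H by ring.
  eapply has_usum_ext; [|exact H]. intro; cbv beta; ring.
Qed.

Lemma has_usum_sumlist {I J} (L : list J) (f : J -> I -> CC) :
  (forall j, In j L -> has_usum (f j) C0) -> has_usum (fun p => Csum (map (fun j => f j p) L)) C0.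
Proof.
  induction L; simpl; intros H. apply has_usum_zero.
  replace C0 with (Cadd C0 C0) by ring. apply has_usum_add; auto.
Qed.

Lemma Rsuml_scale {I} (f : I -> R) k l : Rsuml (fun x => k * f x) l = k * Rsuml f l.
Proof. induction l; simpl. ring. rewrite IHl; ring. Qed.

Lemma Cnorm_Cnat N : Cnorm (Cnat N) = INR N.
Proof. unfold Cnat. rewrite Cnorm_RtoC. apply Rabs_right. apply Rle_ge, pos_INR. Qed.

Lemma fourier_unique f c c' : fourier_h f c -> fourier_h f c' -> forall n ab, c n ab = c' n ab.
Proof.
  intros Hc Hc' n0 ab0. set (p0 := (n0, ab0)).
  set (d := fun p : nat * (Z * Z) => Csub (c (fst p) (snd p)) (c' (fst p) (snd p))).
  set (E := fun (p : nat * (Z * Z)) t z1 z2 => ee (Cadd (Cadd (Cmul (Cnat (fst p)) t) (Cmul (sharp_elt (snd p)) z1)) (Cmul (Cconj (sharp_elt (snd p))) z2))).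
  assert (HD : forall t z1 z2, inH t -> has_usum (fun p => Cmul (d p) (E p t z1 z2)) C0).
  { intros t z1 z2 Ht. eapply has_usum_ext; [|apply (has_usum_sub _ _ _ (Hc t z1 z2 Ht) (Hc' t z1 z2 Ht))].
    intros [n ab]. unfold d, E. cbv beta zeta. cbn [fst snd]. ring. }
  set (u := fun p : nat * (Z * Z) => Cmul (d p) (ee (Cmul (Cnat (fst p)) Ci))).
  assert (Hu : has_usum u C0).
  { eapply has_usum_ext; [|apply (HD Ci C0 C0)]. intros p. unfold u, E. f_equal. f_equal. ring.
    unfold inH, Ci, Cim; simpl; lra. }
  assert (Hup : u p0 = C0).
  { destruct (classic (u p0 = C0)) as [|Hne]; auto. exfalso.
    set (eps := Cnorm (u p0) / 4). assert (He : 0 < eps) by (unfold eps; pose proof (Cnorm_pos _ Hne); lra).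
    destruct (has_usum_tail decNZZ u C0 Hu eps He) as [F0 HF0].
    set (M := lmax (p0 :: F0)). assert (HM : (0 <= M)%Z) by apply lmax_nonneg.
    set (Rz := (4*M+1)%Z). set (Nz := (Rz*Rz*Rz)%Z). assert (HNz : (0 < Nz)%Z) by (unfold Nz, Rz; nia).
    set (N := Z.to_nat Nz). assert (HN : Z.of_nat N = Nz) by (unfold N; apply Z2Nat.id; lia).
    assert (HN0 : (0 < N)%nat) by lia.
    assert (HNR : 0 < INR N) by (apply lt_0_INR; auto).
    set (Kf := fun p : nat * (Z * Z) => (Z.of_nat (fst p) + Rz * fst (snd p) + Rz * Rz * snd (snd p))%Z).
    assert (Hsep : forall p, In p F0 -> p <> p0 -> ((Kf p - Kf p0) mod Z.of_nat N <> 0)%Z).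
    { intros [n [a b]] Hp Hne2 Hm. apply Hne2.
      assert (H1 := lmax_ge (p0 :: F0) (n, (a, b)) (or_intror Hp)). assert (H2 := lmax_ge (p0 :: F0) p0 (or_introl eq_refl)).
      fold M in H1, H2. unfold pmax in H1, H2. unfold p0 in H2, Hm |- *. cbn [fst snd] in H1, H2.
      unfold Kf in Hm. cbn [fst snd] in Hm. rewrite HN in Hm. unfold Nz, Rz in Hm.
      replace (Z.of_nat n + (4 * M + 1) * a + (4 * M + 1) * (4 * M + 1) * b - (Z.of_nat n0 + (4 * M + 1) * fst ab0 + (4 * M + 1) * (4 * M + 1) * snd ab0))%Z
        with ((Z.of_nat n - Z.of_nat n0) + (4 * M + 1) * (a - fst ab0) + (4 * M + 1) * (4 * M + 1) * (b - snd ab0))%Z in Hm by ring.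
      apply sep in Hm; try lia. destruct ab0. cbn [fst snd] in *. f_equal. lia. f_equal; lia. }
    set (V := fun p : nat * (Z * Z) => Cmul (u p) (rsum N (Kf p - Kf p0))).
    assert (HV : has_usum V C0).
    { set (xj := fun j : nat => INR j / INR N).
      set (g := fun (j : nat) (p : nat * (Z * Z)) =>
        Cmul (ee (RtoC (IZR (- Kf p0) * INR j / INR N)))
             (Cmul (d p) (E p (xj j, 1) (IZR (- (Rz*Rz)) * xj j, IZR (- Rz) * xj j) (IZR (- (Rz*Rz)) * xj j, IZR Rz * xj j)))).
      assert (Hg : has_usum (fun p => Csum (map (fun j => g j p) (seq 0 N))) C0).
      { apply has_usum_sumlist. intros j _. unfold g. replace C0 with (Cmul (ee (RtoC (IZR (- Kf p0) * INR j / INR N))) C0) by ring.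
        apply has_usum_scale. apply HD. unfold inH, Cim; simpl; lra. }
      eapply has_usum_ext; [|exact Hg]. intro p. unfold V, rsum, g. rewrite <- Csum_scale. apply Csum_ext. intros j _.
      unfold u, E.
      assert (Eb : Cadd (Cadd (Cmul (Cnat (fst p)) (xj j, 1)) (Cmul (sharp_elt (snd p)) (IZR (- (Rz * Rz)) * xj j, IZR (- Rz) * xj j)))
                     (Cmul (Cconj (sharp_elt (snd p))) (IZR (- (Rz * Rz)) * xj j, IZR Rz * xj j))
                   = Cadd (Cmul (Cnat (fst p)) Ci) (RtoC (IZR (Kf p) * INR j / INR N))).
      { destruct p as [n [a b]]. unfold Kf, xj, sharp_elt. cbn [fst snd]. cunf.
        apply CC_eq; repeat rewrite ?plus_IZR, ?mult_IZR, ?opp_IZR, ?minus_IZR; rewrite <- ?INR_IZR_INZ; field; lra. }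
      assert (Ee : RtoC (IZR (Kf p - Kf p0) * INR j / INR N) = Cadd (RtoC (IZR (- Kf p0) * INR j / INR N)) (RtoC (IZR (Kf p) * INR j / INR N))).
      { cunf. apply CC_eq; repeat rewrite ?plus_IZR, ?mult_IZR, ?opp_IZR, ?minus_IZR; field; lra. }
      rewrite Eb, Ee, !ee_add. ring. }
    destruct (HV eps He) as [F1 HF1].
    set (F := nodup decNZZ (F1 ++ p0 :: F0)).
    assert (NF : NoDup F) by apply NoDup_nodup.
    assert (HSF : Cnorm (Csub (Csum (map V F)) C0) < eps).
    { apply HF1; auto. intros x Hx; apply nodup_In; apply in_or_app; left; auto. }
    rewrite (Csum_filter V (inb decNZZ (p0 :: F0)) F) in HSF.
    set (A := filter (inb decNZZ (p0 :: F0)) F) in HSF.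
    set (B := filter (fun x => negb (inb decNZZ (p0 :: F0) x)) F) in HSF.
    assert (HA : Csum (map V A) = V p0).
    { apply Csum_single. apply NoDup_filter; auto.
      apply filter_In. split. apply nodup_In. apply in_or_app; right; left; auto. apply (inb_true decNZZ). left; auto.
      intros y Hy Hne2. apply filter_In in Hy. destruct Hy as [_ Hy]. apply (inb_true decNZZ) in Hy.
      destruct Hy as [<-|Hy]; [contradiction|]. unfold V. rewrite rsum_ndiv; auto. ring. }
    assert (HVp0 : V p0 = Cmul (u p0) (Cnat N)).
    { unfold V. rewrite Z.sub_diag, rsum_div; auto. }
    assert (HB : Cnorm (Csum (map V B)) < INR N * eps).
    { eapply Rle_lt_trans. apply Cnorm_Csum.
      apply Rle_lt_trans with (Rsuml (fun p => INR N * Cnorm (u p)) B).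
      - apply Rsuml_mono. intro p. unfold V. rewrite Cnorm_mul. pose proof (Cnorm_nonneg (u p)).
        destruct (Z.eq_dec ((Kf p - Kf p0) mod Z.of_nat N) 0).
        + rewrite rsum_div, Cnorm_Cnat; auto. lra.
        + rewrite rsum_ndiv, Cnorm_C0; auto. nra.
      - rewrite Rsuml_scale. apply Rmult_lt_compat_l; auto. apply HF0. apply NoDup_filter; auto.
        intros x Hx Hx0. apply filter_In in Hx. destruct Hx as [_ Hx]. apply (inb_false decNZZ) in Hx. apply Hx. right; auto. }
    rewrite HA in HSF.
    assert (HVn : Cnorm (V p0) = INR N * Cnorm (u p0)).
    { rewrite HVp0, Cnorm_mul, Cnorm_Cnat. ring. }
    assert (Cnorm (V p0) <= Cnorm (Csub (Cadd (V p0) (Csum (map V B))) C0) + Cnorm (Csum (map V B))).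
    { replace (V p0) with (Cadd (Csub (Cadd (V p0) (Csum (map V B))) C0) (Copp (Csum (map V B)))) at 1 by ring.
      eapply Rle_trans. apply Cnorm_add. rewrite Cnorm_opp. lra. }
    assert (HN1 : 1 <= INR N) by (apply (le_INR 1 N); lia).
    assert (Cnorm (u p0) = 4 * eps) by (unfold eps; field).
    nra. }
  assert (Hd : d p0 = C0).
  { apply (Cmul_eq0 (ee (Cmul (Cnat (fst p0)) Ci))). apply ee_neq0. rewrite <- Hup. unfold u. ring. }
  unfold d, p0 in Hd. cbn [fst snd] in Hd.
  replace (c n0 ab0) with (Cadd (Csub (c n0 ab0) (c' n0 ab0)) (c' n0 ab0)) by ring. rewrite Hd. ring.
Qed.
Lemma norm_cond a b (n m : nat) : ~ (Nrm (sharp_elt (a, b)) <= INR n * INR m) ->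
  forall r1 r2, IZR r1 * IZR r1 + IZR r2 * IZR r2 = IZR a * IZR a + IZR b * IZR b ->
  ~ (IZR r1 * IZR r1 + IZR r2 * IZR r2 <= 4 * INR n * INR m).
Proof. rewrite Nrm_sharp; cbn [fst snd]. intros H r1 r2 E C. apply H. lra. Qed.

Lemma norm_cond_eq a b (n m : nat) : Nrm (sharp_elt (a, b)) = INR n * INR m ->
  forall r1 r2, IZR r1 * IZR r1 + IZR r2 * IZR r2 = IZR a * IZR a + IZR b * IZR b ->
  IZR r1 * IZR r1 + IZR r2 * IZR r2 = 4 * INR n * INR m.
Proof. rewrite Nrm_sharp; cbn [fst snd]. intros H r1 r2 E. lra. Qed.

Lemma HermJ_Hsum k1 k2 m phi1 phi2 c1 c2 :
  JacobiForm k1 m phi1 -> JacobiForm k2 m phi2 ->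
  fourier_cl phi1 c1 -> fourier_cl phi2 c2 ->
  (forall n r, ~ (IZR r * IZR r <= 4 * INR n * INR m) -> c1 n r = C0) ->
  (forall n r, ~ (IZR r * IZR r <= 4 * INR n * INR m) -> c2 n r = C0) ->
  HermJacobiForm (k1 + k2) m (Hsum phi1 phi2 (k1 + k2)).
Proof.
  intros J1 J2 F1 F2 S1 S2.
  split; [|split; [|split]].
  - apply holo3_Hsum; [apply J1 | apply J2].
  - apply Hsum_SL2; auto.
  - intros; apply Hsum_heis; auto.
  - exists (Hcoef c1 c2 (k1 + k2)). split; [|apply Hsum_fourier; auto].
    intros n [a b] H. unfold Hcoef, cadd. unfold sg1, sg2, sg3, sg4; cbn [fst snd].
    rewrite !(sumterm_zero c1 c2 m) by (auto; apply (norm_cond a b n m H); rewrite ?opp_IZR; ring). ring.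
Qed.

Theorem proposition4p5 (k1 k2 m : nat) (hk1 : (0 < k1)%nat) (hk2 : (0 < k2)%nat)
  (hm : (0 < m)%nat) (phi1 phi2 : CC -> CC -> CC) :
  JacobiForm k1 m phi1 -> JacobiForm k2 m phi2 ->
  HermJacobiForm (k1 + k2) m (Hmap k1 k2 phi1 phi2)
  /\ (JacobiCuspForm k1 m phi1 -> JacobiCuspForm k2 m phi2 ->
      HermJacobiCuspForm (k1 + k2) m (Hmap k1 k2 phi1 phi2)).
Proof.
  intros J1 J2. rewrite Hmap_eq.
  pose proof J1 as [_ [_ [_ [c1 [S1 F1]]]]]. pose proof J2 as [_ [_ [_ [c2 [S2 F2]]]]].
  split.
  - eapply HermJ_Hsum; eauto.
  - intros [_ K1] [_ K2]. split. eapply HermJ_Hsum; eauto.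
    intros coef Hf n [a b] HN.
    rewrite (fourier_unique _ _ _ Hf (Hsum_fourier phi1 phi2 c1 c2 (k1 + k2) F1 F2)).
    specialize (K1 c1 F1). specialize (K2 c2 F2).
    unfold Hcoef, cadd. unfold sg1, sg2, sg3, sg4; cbn [fst snd].
    rewrite !(sumterm_cusp c1 c2 m) by (auto; apply (norm_cond_eq a b n m HN); rewrite ?opp_IZR; ring). ring.
Qed.
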